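(* Let $\mathcal{P}re$ be the set of preorders on $\mathcal{SC}$. The map $F:\mathcal{P}re\to\mathcal{P}re$, $F(B)=\sqsubseteq_B$, is well defined and monotone: if $B\subseteq B'$ are preorders then $\sqsubseteq_B\,\subseteq\,\sqsubseteq_{B'}$.
   Context: Fix base types $BT$ with preorder $\leq_{\mathsf b}$ and labels $\mathcal L$. Contract terms: $\sigma::=\mathbf 1\mid ?\mathtt t.\sigma\mid !\mathtt t.\sigma\mid !(\sigma).\sigma\mid ?(\sigma).\sigma\mid \sum_{i\in I}?l_i.\sigma_i\mid \bigoplus_{i\in I}!l_i.\sigma_i\mid \mu x.\sigma\mid x$ ($I$ finite nonempty, labels distinct). $\mathcal{SC}$ = closed guarded terms. LTS: $\mathbf 1\xrightarrow\checkmark$; $\lambda.\sigma\xrightarrow\lambda\sigma$ for prefixes (including $!l.\sigma$); $\bigoplus_{i\in I}!l_i.\sigma_i\xrightarrow\tau!l_i.\sigma_i$ for $|I|>1$; $\sum ?l_i.\sigma_i\xrightarrow{?l_i}\sigma_i$; $\mu x.\sigma\xrightarrow\tau\sigma[\mu x.\sigma/x]$. For $B\subseteq\mathcal{SC}^2$: $\lambda_1\bowtie_B\lambda_2$ iff the pair is $(!l,?l)$, $(?l,!l)$, $(!\mathtt t_1,?\mathtt t_2)$ with $\mathtt t_1\leq_{\mathsf b}\mathtt t_2$, $(?\mathtt t_1,!\mathtt t_2)$ with $\mathtt t_2\leq_{\mathsf b}\mathtt t_1$, $(!(\sigma_1),?(\sigma_2))$ with $\sigma_1B\sigma_2$, $(?(\sigma_1),!(\sigma_2))$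 with $\sigma_2B\sigma_1$. $\rho\|\sigma\xrightarrow\tau_B$ by a $\tau$ of either side or by synchronisation on $\lambda_1\bowtie_B\lambda_2$. $\dashv_B$: greatest $R$ with $\rho R\sigma$ implying (i) if $\rho\|\sigma$ has no $\xrightarrow\tau_B$ move then $\rho\xrightarrow\checkmark$ and $\sigma\xrightarrow\checkmark$; (ii) every $\rho\|\sigma\xrightarrow\tau_B\rho'\|\sigma'$ has $\rho'R\sigma'$. $\sigma_1\sqsubseteq_B\sigma_2$ iff for all $\rho\in\mathcal{SC}$, $\rho\dashv_B\sigma_1$ implies $\rho\dashv_B\sigma_2$. *)

(* Defs.v *)
From Stdlib Require Import List.
Import ListNotations.
Set Implicit Arguments.

Section Contracts.
Variables (BT L : Type) (leb : BT -> BT -> Prop).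

(* Contract terms.  [Ext bs] = sum_{i} ?l_i.s_i, [Int bs] = oplus_{i} !l_i.s_i;
   the output prefix !l.s is the singleton [Int [(l,s)]].
   Variables are named by nat. *)
Inductive term : Type :=
| One : term
| InT : BT -> term -> term
| OutT : BT -> term -> term
| OutS : term -> term -> term
| InS : term -> term -> term
| Ext : list (L * term) -> term
| Int : list (L * term) -> term
| Mu : nat -> term -> term
| Var : nat -> term.

Inductive free (x : nat) : term -> Prop :=
| F_Var : free x (Var x)
| F_InT t s : free x s -> free x (InT t s)
| F_OutT t s : free x s -> free x (OutT t s)
| F_OutS1 c s : free x c -> free x (OutS c s)
| F_OutS2 c s : free x s -> free x (OutS c s)
| F_InS1 c s : free x c -> free x (InS c s)
| F_InS2 c s : free x s -> free x (InS c s)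
| F_Ext bs l s : In (l, s) bs -> free x s -> free x (Ext bs)
| F_Int bs l s : In (l, s) bs -> free x s -> free x (Int bs)
| F_Mu y s : x <> y -> free x s -> free x (Mu y s).

Definition closed (s : term) : Prop := forall x, ~ free x s.

Inductive unguarded (x : nat) : term -> Prop :=
| UG_Var : unguarded x (Var x)
| UG_Mu y s : x <> y -> unguarded x s -> unguarded x (Mu y s).

Inductive wfg : term -> Prop :=
| W_One : wfg One
| W_InT t s : wfg s -> wfg (InT t s)
| W_OutT t s : wfg s -> wfg (OutT t s)
| W_OutS c s : wfg c -> wfg s -> wfg (OutS c s)
| W_InS c s : wfg c -> wfg s -> wfg (InS c s)
| W_Ext bs : bs <> [] -> NoDup (map fst bs) ->
    Forall (fun p => wfg (snd p)) bs -> wfg (Ext bs)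
| W_Int bs : bs <> [] -> NoDup (map fst bs) ->
    Forall (fun p => wfg (snd p)) bs -> wfg (Int bs)
| W_Mu x s : ~ unguarded x s -> wfg s -> wfg (Mu x s)
| W_Var x : wfg (Var x).

Definition SC (s : term) : Prop := closed s /\ wfg s.

(* substitution s[t/x]; only used with t closed, so no capture *)
Fixpoint subst (x : nat) (t s : term) {struct s} : term :=
  match s with
  | One => One
  | InT b s' => InT b (subst x t s')
  | OutT b s' => OutT b (subst x t s')
  | OutS c s' => OutS (subst x t c) (subst x t s')
  | InS c s' => InS (subst x t c) (subst x t s')
  | Ext bs => Ext (map (fun p => (fst p, subst x t (snd p))) bs)
  | Int bs => Int (map (fun p => (fst p, subst x t (snd p))) bs)
  | Mu y s' => if Nat.eqb x y then Mu y s' else Mu y (subst x t s')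
  | Var y => if Nat.eqb x y then t else Var y
  end.

Inductive action : Type :=
| ACheck : action
| ATau : action
| AInT : BT -> action
| AOutT : BT -> action
| AOutS : term -> action
| AInS : term -> action
| AInL : L -> action
| AOutL : L -> action.

Inductive step : term -> action -> term -> Prop :=
| St_One : step One ACheck One
| St_InT t s : step (InT t s) (AInT t) s
| St_OutT t s : step (OutT t s) (AOutT t) s
| St_OutS c s : step (OutS c s) (AOutS c) s
| St_InS c s : step (InS c s) (AInS c) s
| St_OutL l s : step (Int [(l, s)]) (AOutL l) s
| St_IntTau bs l s : 1 < length bs -> In (l, s) bs ->
    step (Int bs) ATau (Int [(l, s)])
| St_Ext bs l s : In (l, s) bs -> step (Ext bs) (AInL l) s
| St_Mu x s : step (Mu x s) ATau (subst x (Mu x s) s).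

Definition matches (B : term -> term -> Prop) (a1 a2 : action) : Prop :=
  match a1, a2 with
  | AOutL l1, AInL l2 => l1 = l2
  | AInL l1, AOutL l2 => l1 = l2
  | AOutT t1, AInT t2 => leb t1 t2
  | AInT t1, AOutT t2 => leb t2 t1
  | AOutS s1, AInS s2 => B s1 s2
  | AInS s1, AOutS s2 => B s2 s1
  | _, _ => False
  end.

Inductive sys_tau (B : term -> term -> Prop) : term -> term -> term -> term -> Prop :=
| Sys_L r r' s : step r ATau r' -> sys_tau B r s r' s
| Sys_R r s s' : step s ATau s' -> sys_tau B r s r s'
| Sys_Sync r r' s s' a1 a2 : step r a1 r' -> step s a2 s' -> matches B a1 a2 ->
    sys_tau B r s r' s'.

Definition can_check (s : term) : Prop := exists s', step s ACheck s'.

Definition compliance_rel (B R : term -> term -> Prop) : Prop :=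
  forall r s, R r s ->
    ((forall r' s', ~ sys_tau B r s r' s') -> can_check r /\ can_check s) /\
    (forall r' s', sys_tau B r s r' s' -> R r' s').

Definition complies (B : term -> term -> Prop) (r s : term) : Prop :=
  exists R, compliance_rel B R /\ R r s.

Definition subcontract (B : term -> term -> Prop) (s1 s2 : term) : Prop :=
  SC s1 /\ SC s2 /\ (forall r, SC r -> complies B r s1 -> complies B r s2).

Definition preorder_SC (B : term -> term -> Prop) : Prop :=
  (forall s1 s2, B s1 s2 -> SC s1 /\ SC s2) /\
  (forall s, SC s -> B s s) /\
  (forall s1 s2 s3, B s1 s2 -> B s2 s3 -> B s1 s3).

End Contracts.

(* Main.v *)
Require Import Defs.
From Stdlib Require Import List Arith Lia Classical ClassicalEpsilon.
Import ListNotations.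
Set Implicit Arguments.

Section Proof.
Variables (BT L : Type) (leb : BT -> BT -> Prop).
Notation term := (term BT L).
#[local] Arguments One {BT L}.
#[local] Arguments ATau {BT L}.
#[local] Arguments ACheck {BT L}.

Section TI.
Variable P : term -> Prop.
Hypotheses (H1 : P One) (H2 : forall t s, P s -> P (InT t s))
  (H3 : forall t s, P s -> P (OutT t s))
  (H4 : forall c s, P c -> P s -> P (OutS c s))
  (H5 : forall c s, P c -> P s -> P (InS c s))
  (H6 : forall bs, Forall (fun p => P (snd p)) bs -> P (Ext bs))
  (H7 : forall bs, Forall (fun p => P (snd p)) bs -> P (Int bs))
  (H8 : forall x s, P s -> P (Mu x s)) (H9 : forall x, P (Var BT L x)).
Fixpoint term_ind' (t : term) : P t :=
  match t with
  | One => H1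
  | InT b s => H2 b (term_ind' s)
  | OutT b s => H3 b (term_ind' s)
  | OutS c s => H4 (term_ind' c) (term_ind' s)
  | InS c s => H5 (term_ind' c) (term_ind' s)
  | Ext bs => H6 ((fix F (l : list (L * term)) : Forall (fun p => P (snd p)) l :=
       match l with nil => Forall_nil _ | cons p l' => Forall_cons p (term_ind' (snd p)) (F l') end) bs)
  | Int bs => H7 ((fix F (l : list (L * term)) : Forall (fun p => P (snd p)) l :=
       match l with nil => Forall_nil _ | cons p l' => Forall_cons p (term_ind' (snd p)) (F l') end) bs)
  | Mu x s => H8 x (term_ind' s)
  | Var _ _ x => H9 x
  end.
End TI.

Lemma unguarded_free x (s : term) : unguarded x s -> free x s.
Proof. induction 1; constructor; auto. Qed.

Lemma free_subst z x (t s : term) : free z (subst x t s) -> (free z s /\ z <> x) \/ free z t.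
Proof.
  induction s using term_ind'; simpl; intros Hf; try (inversion Hf; subst; fail).
  - inversion Hf; subst. destruct (IHs ltac:(assumption)); [left; intuition; constructor; auto | auto].
  - inversion Hf; subst. destruct (IHs ltac:(assumption)); [left; intuition; constructor; auto | auto].
  - inversion Hf; subst.
    + destruct (IHs1 ltac:(assumption)); [left; intuition; constructor; auto | auto].
    + destruct (IHs2 ltac:(assumption)); [left; intuition; apply F_OutS2; auto | auto].
  - inversion Hf; subst.
    + destruct (IHs1 ltac:(assumption)); [left; intuition; constructor; auto | auto].
    + destruct (IHs2 ltac:(assumption)); [left; intuition; apply F_InS2; auto | auto].
  - inversion Hf; subst. match goal with Hi: In _ (map _ _) |- _ => apply in_map_iff in Hi; destruct Hi as [[l' s'] [E Hin]] end.
    simpl in E. injection E; intros; subst.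
    rewrite Forall_forall in H. destruct (H _ Hin ltac:(assumption)) as [[? ?]|?]; auto.
    left; split; auto. eapply F_Ext; eauto.
  - inversion Hf; subst. match goal with Hi: In _ (map _ _) |- _ => apply in_map_iff in Hi; destruct Hi as [[l' s'] [E Hin]] end.
    simpl in E. injection E; intros; subst.
    rewrite Forall_forall in H. destruct (H _ Hin ltac:(assumption)) as [[? ?]|?]; auto.
    left; split; auto. eapply F_Int; eauto.
  - destruct (Nat.eqb_spec x x0).
    + subst. inversion Hf; subst. left; split; [constructor; auto | auto].
    + inversion Hf; subst. destruct (IHs ltac:(assumption)) as [[? ?]|?]; auto.
      left; split; [constructor; auto|auto].
  - destruct (Nat.eqb_spec x x0); auto.
    inversion Hf; subst. left; split; [constructor|auto].
Qed.

Lemma unguarded_subst y x (t s : term) : unguarded y (subst x t s) -> unguarded y s \/ free y t.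
Proof.
  induction s using term_ind'; simpl; intros Hf; try (inversion Hf; fail).
  - destruct (Nat.eqb_spec x x0); auto.
    inversion Hf; subst. destruct (IHs ltac:(assumption)); auto. left; constructor; auto.
  - destruct (Nat.eqb_spec x x0); auto. right; apply unguarded_free; auto.
Qed.

Lemma wfg_subst x (t s : term) : wfg s -> wfg t -> (forall z, ~ free z t) -> wfg (subst x t s).
Proof.
  intros Hs Ht Hc. induction s using term_ind'; simpl; inversion Hs; subst.
  - constructor.
  - constructor; auto.
  - constructor; auto.
  - constructor; auto.
  - constructor; auto.
  - constructor.
    + intro E. apply map_eq_nil in E; auto.
    + rewrite map_map; simpl. assumption.
    + rewrite Forall_forall in *. intros [l' s'] Hin. apply in_map_iff in Hin.
      destruct Hin as [[l2 s2] [E Hin]]. injection E; intros; subst. simpl.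
      apply (H _ Hin). match goal with Hw : forall y, In y bs -> wfg (snd y) |- _ => apply (Hw _ Hin) end.
  - constructor.
    + intro E. apply map_eq_nil in E; auto.
    + rewrite map_map; simpl. assumption.
    + rewrite Forall_forall in *. intros [l' s'] Hin. apply in_map_iff in Hin.
      destruct Hin as [[l2 s2] [E Hin]]. injection E; intros; subst. simpl.
      apply (H _ Hin). match goal with Hw : forall y, In y bs -> wfg (snd y) |- _ => apply (Hw _ Hin) end.
  - destruct (Nat.eqb_spec x x0); constructor; auto.
    intro U. destruct (unguarded_subst _ _ _ U); auto. apply (Hc x0); auto.
  - destruct (Nat.eqb_spec x x0); [auto|constructor].
Qed.


Lemma SC_InT t (s : term) : SC (InT t s) -> SC s.
Proof. intros [C W]; split. intros z F; apply (C z); constructor; auto. inversion W; auto. Qed.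
Lemma SC_OutT t (s : term) : SC (OutT t s) -> SC s.
Proof. intros [C W]; split. intros z F; apply (C z); constructor; auto. inversion W; auto. Qed.
Lemma SC_OutS1 c (s : term) : SC (OutS c s) -> SC c.
Proof. intros [C W]; split. intros z F; apply (C z); constructor; auto. inversion W; auto. Qed.
Lemma SC_OutS2 c (s : term) : SC (OutS c s) -> SC s.
Proof. intros [C W]; split. intros z F; apply (C z); apply F_OutS2; auto. inversion W; auto. Qed.
Lemma SC_InS1 c (s : term) : SC (InS c s) -> SC c.
Proof. intros [C W]; split. intros z F; apply (C z); constructor; auto. inversion W; auto. Qed.
Lemma SC_InS2 c (s : term) : SC (InS c s) -> SC s.
Proof. intros [C W]; split. intros z F; apply (C z); apply F_InS2; auto. inversion W; auto. Qed.
Lemma SC_Ext_in bs l (x : term) : SC (Ext bs) -> In (l, x) bs -> SC x.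
Proof. intros [C W] Hin; split. intros z F; apply (C z); eapply F_Ext; eauto.
  inversion W; subst. match goal with Hw: Forall _ bs |- _ => rewrite Forall_forall in Hw; apply (Hw _ Hin) end. Qed.
Lemma SC_Int_in bs l (x : term) : SC (Int bs) -> In (l, x) bs -> SC x.
Proof. intros [C W] Hin; split. intros z F; apply (C z); eapply F_Int; eauto.
  inversion W; subst. match goal with Hw: Forall _ bs |- _ => rewrite Forall_forall in Hw; apply (Hw _ Hin) end. Qed.
Lemma SC_Int_single bs l (x : term) : SC (Int bs) -> In (l, x) bs -> SC (Int [(l, x)]).
Proof. intros H Hin. pose proof (@SC_Int_in bs l x H Hin) as [C1 W1]. destruct H as [C W]. split.
  - intros z F. inversion F; subst. match goal with Hi: In _ [_] |- _ => destruct Hi as [E|[]] end. injection E; intros; subst.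
    apply (C z); eapply F_Int; eauto.
  - constructor. discriminate. simpl. constructor. intros []. constructor. constructor. auto.
    constructor. Qed.
Lemma SC_unfold x (b : term) : SC (Mu x b) -> SC (subst x (Mu x b) b).
Proof. intros [C W]. split.
  - intros z F. destruct (free_subst _ _ _ F) as [[F1 N]|F1]; apply (C z); auto.
    constructor; auto.
  - apply wfg_subst; auto. inversion W; auto.
Qed.
Lemma step_SC (s : term) a t : step s a t -> SC s -> SC t.
Proof.
  intros H; destruct H; intros Hs.
  - auto.
  - eapply SC_InT; eauto.
  - eapply SC_OutT; eauto.
  - eapply SC_OutS2; eauto.
  - eapply SC_InS2; eauto.
  - eapply SC_Int_in; eauto. left; reflexivity.
  - eapply SC_Int_single; eauto.
  - eapply SC_Ext_in; eauto.
  - apply SC_unfold; auto.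
Qed.

Lemma nodup_uniq (cs : list (L * term)) l x y :
  NoDup (map fst cs) -> In (l, x) cs -> In (l, y) cs -> x = y.
Proof.
  induction cs as [|[l0 z] cs IH]; simpl; intros N H1 H2; [contradiction|].
  inversion N; subst.
  destruct H1 as [E1|H1]; destruct H2 as [E2|H2].
  - injection E1; injection E2; intros; subst; auto.
  - injection E1; intros; subst. exfalso; apply H3. apply (in_map fst) in H2; auto.
  - injection E2; intros; subst. exfalso; apply H3. apply (in_map fst) in H1; auto.
  - eauto.
Qed.

Lemma SC_nodupE (bs : list (L * term)) : SC (Ext bs) -> NoDup (map fst bs).
Proof. intros [_ W]; inversion W; auto. Qed.
Lemma SC_nodupI (bs : list (L * term)) : SC (Int bs) -> NoDup (map fst bs).
Proof. intros [_ W]; inversion W; auto. Qed.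

Inductive Ustar : term -> term -> Prop :=
| U_refl s : Ustar s s
| U_step x b d : Ustar (subst x (Mu x b) b) d -> Ustar (Mu x b) d.

Definition notMu (t : term) : Prop := match t with Mu _ _ => False | _ => True end.

Lemma Ustar_notMu s d : Ustar s d -> notMu s -> d = s.
Proof. intros H; destruct H; simpl; tauto. Qed.

Lemma Ustar_det s d1 d2 : Ustar s d1 -> Ustar s d2 -> notMu d1 -> notMu d2 -> d1 = d2.
Proof.
  intros H; revert d2; induction H; intros d2 H2 N1 N2.
  - symmetry; apply Ustar_notMu; auto.
  - inversion H2; subst. simpl in N2; contradiction. auto.
Qed.

Lemma Ustar_SC s d : Ustar s d -> SC s -> SC d.
Proof. induction 1; auto. intros; apply IHUstar; apply SC_unfold; auto. Qed.

Inductive Tstar : term -> term -> Prop :=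
| T_refl s : Tstar s s
| T_step s s1 s2 : step s ATau s1 -> Tstar s1 s2 -> Tstar s s2.

Lemma Tstar_SC s d : Tstar s d -> SC s -> SC d.
Proof. induction 1; auto. intros; apply IHTstar; eapply step_SC; eauto. Qed.

Lemma Ustar_Tstar s d : Ustar s d -> Tstar s d.
Proof. induction 1. constructor. econstructor; eauto. constructor. Qed.

Lemma Tstar_trans a b c : Tstar a b -> Tstar b c -> Tstar a c.
Proof. induction 1; auto. intros; econstructor; eauto. Qed.

Lemma single_no_tau l (x : term) y : ~ step (Int [(l, x)]) ATau y.
Proof. intros H; inversion H; subst. simpl in *. lia. Qed.

Lemma K_lemma s s' : Tstar s s' -> notMu s' ->
  exists t, Ustar s t /\ notMu t /\
   (s' = t \/ exists bs l x, t = Int bs /\ In (l, x) bs /\ s' = Int [(l, x)]).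
Proof.
  induction 1; intros N.
  - exists s; repeat split; auto. constructor.
  - inversion H; subst.
    + inversion H0; subst.
      * exists (Int bs); split; [constructor|split; [exact I| right; eauto 6]].
      * exfalso; eapply single_no_tau; eauto.
    + destruct (IHTstar N) as [t [U [N2 E]]]. exists t; split; [constructor; auto|auto].
Qed.

Definition nfo (s : term) : option term :=
  match excluded_middle_informative (exists t, Ustar s t /\ notMu t) with
  | left H => Some (proj1_sig (constructive_indefinite_description _ H))
  | right _ => None
  end.

Lemma nfo_some s t : nfo s = Some t -> Ustar s t /\ notMu t.
Proof. unfold nfo. destruct excluded_middle_informative; [|discriminate].
  destruct constructive_indefinite_description; simpl; intros E; injection E; intros; subst; auto. Qed.

Lemma nfo_eq s t : Ustar s t -> notMu t -> nfo s = Some t.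
Proof. intros U N. unfold nfo. destruct excluded_middle_informative as [H|H].
  - destruct constructive_indefinite_description as [t' [U' N']]; simpl.
    f_equal. eapply Ustar_det; eauto.
  - exfalso; apply H; eauto. Qed.

Definition lookup (l : L) (cs : list (L * term)) : option term :=
  match excluded_middle_informative (exists x, In (l, x) cs) with
  | left H => Some (proj1_sig (constructive_indefinite_description _ H))
  | right _ => None
  end.

Lemma lookup_some l cs x : lookup l cs = Some x -> In (l, x) cs.
Proof. unfold lookup. destruct excluded_middle_informative; [|discriminate].
  destruct constructive_indefinite_description; simpl; intros E; injection E; intros; subst; auto. Qed.

Lemma lookup_eq l cs x : NoDup (map fst cs) -> In (l, x) cs -> lookup l cs = Some x.
Proof. intros N Hin. unfold lookup. destruct excluded_middle_informative as [H|H].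
  - destruct constructive_indefinite_description as [y Hy]; simpl. f_equal. eapply nodup_uniq; eauto.
  - exfalso; eauto. Qed.


Definition closedt (t : term) := forall z, ~ free z t.

Lemma subst_notfree x M (t : term) : ~ free x t -> subst x M t = t.
Proof.
  induction t using term_ind'; simpl; intros Hn; try reflexivity.
  - f_equal. apply IHt. intro F; apply Hn; constructor; auto.
  - f_equal. apply IHt. intro F; apply Hn; constructor; auto.
  - f_equal. apply IHt1. intro F; apply Hn; constructor; auto. apply IHt2. intro F; apply Hn; apply F_OutS2; auto.
  - f_equal. apply IHt1. intro F; apply Hn; constructor; auto. apply IHt2. intro F; apply Hn; apply F_InS2; auto.
  - f_equal. rewrite <- map_id. apply map_ext_in. intros [l y] Hin. simpl. f_equal.
    rewrite Forall_forall in H. apply (H _ Hin). intro F; apply Hn. eapply F_Ext; eauto.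
  - f_equal. rewrite <- map_id. apply map_ext_in. intros [l y] Hin. simpl. f_equal.
    rewrite Forall_forall in H. apply (H _ Hin). intro F; apply Hn. eapply F_Int; eauto.
  - destruct (Nat.eqb_spec x x0); auto. f_equal. apply IHt. intro F; apply Hn; constructor; auto.
  - destruct (Nat.eqb_spec x x0); auto. subst. exfalso; apply Hn; constructor.
Qed.

Lemma notfree_subst x M (t : term) : closedt M -> ~ free x (subst x M t).
Proof. intros C F. destruct (free_subst _ _ _ F) as [[_ N]|F2]. apply N; auto. apply (C x); auto. Qed.

Lemma subst_comm x y S M (t : term) : x <> y -> closedt S -> closedt M ->
  subst x S (subst y M t) = subst y M (subst x S t).
Proof.
  intros Nxy CS CM. induction t using term_ind'; simpl; try congruence.
  - f_equal. rewrite !map_map. apply map_ext_in. intros p Hp. simpl. f_equal.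
    rewrite Forall_forall in H. apply (H _ Hp).
  - f_equal. rewrite !map_map. apply map_ext_in. intros p Hp. simpl. f_equal.
    rewrite Forall_forall in H. apply (H _ Hp).
  - destruct (Nat.eqb_spec y x0); destruct (Nat.eqb_spec x x0); subst; simpl.
    + congruence.
    + rewrite Nat.eqb_refl. destruct (Nat.eqb_spec x x0); [congruence|]. reflexivity.
    + rewrite Nat.eqb_refl. destruct (Nat.eqb_spec y x0); [congruence|]. reflexivity.
    + destruct (Nat.eqb_spec x x0); [congruence|]. destruct (Nat.eqb_spec y x0); [congruence|].
      f_equal; auto.
  - destruct (Nat.eqb_spec y x0); destruct (Nat.eqb_spec x x0); subst; simpl.
    + congruence.
    + rewrite Nat.eqb_refl. apply subst_notfree; auto.
    + rewrite Nat.eqb_refl. symmetry; apply subst_notfree; auto.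
    + destruct (Nat.eqb_spec x x0); [congruence|]. destruct (Nat.eqb_spec y x0); [congruence|]. reflexivity.
Qed.

(* environments: the last entry is applied first *)
Definition cl (e : list (nat * term)) (t : term) : term :=
  fold_right (fun p acc => subst (fst p) (snd p) acc) t e.

Definition EC (e : list (nat * term)) := Forall (fun p => closedt (snd p)) e.
Definition FV (e : list (nat * term)) (t : term) := forall z, free z t -> In z (map fst e).

Lemma CL e (t : term) z : EC e -> free z (cl e t) -> free z t /\ ~ In z (map fst e).
Proof.
  induction e as [|[y M] e IH]; simpl; intros H F; auto.
  inversion H; subst. destruct (free_subst _ _ _ F) as [[F1 N]|F1].
  - destruct (IH H3 F1). split; auto. intros [E|I]; auto.
  - exfalso; apply (H2 z); auto.
Qed.

Lemma cl_closed e (t : term) : closedt t -> cl e t = t.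
Proof. induction e as [|[y M] e IH]; simpl; intros C; auto. rewrite IH; auto. apply subst_notfree; auto. Qed.

Lemma cl_app e1 e2 (t : term) : cl (e1 ++ e2) t = cl e1 (cl e2 t).
Proof. unfold cl. apply fold_right_app. Qed.

Lemma cl_comm x S e (t : term) : ~ In x (map fst e) -> EC e -> closedt S ->
  subst x S (cl e t) = cl e (subst x S t).
Proof.
  induction e as [|[y M] e IH]; simpl; intros Hn He CS; auto.
  inversion He; subst. rewrite subst_comm; auto. f_equal. apply IH; auto.
Qed.

Lemma cl_closed_FV e (t : term) : EC e -> FV e t -> closedt (cl e t).
Proof. intros H F z Fz. destruct (@CL e t z H Fz) as [F1 N]. apply N; apply F; auto. Qed.

Fixpoint dualE (e : list (nat * term)) (s : term) : term :=
  match s with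
  | One => One
  | InT t s => OutT t (dualE e s)
  | OutT t s => InT t (dualE e s)
  | OutS c s => InS (cl e c) (dualE e s)
  | InS c s => OutS (cl e c) (dualE e s)
  | Ext bs => Int (map (fun p => (fst p, dualE e (snd p))) bs)
  | Int bs => Ext (map (fun p => (fst p, dualE e (snd p))) bs)
  | Mu x s => Mu x (dualE (e ++ [(x, cl e (Mu x s))]) s)
  | Var _ _ x => Var BT L x
  end.

Definition dual (s : term) := dualE [] s.

Lemma FV_InT e t (s : term) : FV e (InT t s) -> FV e s.
Proof. intros F z Fz; apply F; constructor; auto. Qed.
Lemma FV_OutT e t (s : term) : FV e (OutT t s) -> FV e s.
Proof. intros F z Fz; apply F; constructor; auto. Qed.
Lemma FV_OutS1 e c (s : term) : FV e (OutS c s) -> FV e c.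
Proof. intros F z Fz; apply F; constructor; auto. Qed.
Lemma FV_OutS2 e c (s : term) : FV e (OutS c s) -> FV e s.
Proof. intros F z Fz; apply F; apply F_OutS2; auto. Qed.
Lemma FV_InS1 e c (s : term) : FV e (InS c s) -> FV e c.
Proof. intros F z Fz; apply F; constructor; auto. Qed.
Lemma FV_InS2 e c (s : term) : FV e (InS c s) -> FV e s.
Proof. intros F z Fz; apply F; apply F_InS2; auto. Qed.
Lemma FV_Ext e bs l (s : term) : FV e (Ext bs) -> In (l, s) bs -> FV e s.
Proof. intros F Hi z Fz; apply F; eapply F_Ext; eauto. Qed.
Lemma FV_Int e bs l (s : term) : FV e (Int bs) -> In (l, s) bs -> FV e s.
Proof. intros F Hi z Fz; apply F; eapply F_Int; eauto. Qed.
Lemma FV_Mu e x (s : term) : FV e (Mu x s) -> FV (e ++ [(x, cl e (Mu x s))]) s.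
Proof. intros F z Fz. rewrite map_app. simpl. apply in_or_app.
  destruct (Nat.eq_dec z x). right; left; auto. left; apply F; constructor; auto. Qed.
Lemma EC_Mu e x (s : term) : EC e -> FV e (Mu x s) -> EC (e ++ [(x, cl e (Mu x s))]).
Proof. intros H F. unfold EC. apply Forall_app; split; auto. constructor; [|constructor].
  apply cl_closed_FV; auto. Qed.

Lemma E2 x S (b : term) : forall e, In x (map fst e) -> EC e -> closedt S -> FV e b ->
  dualE ((x, S) :: e) b = dualE e b.
Proof.
  induction b using term_ind'; intros e Hx He CS Hf; simpl.
  - reflexivity.
  - f_equal; apply IHb; auto. eapply FV_InT; eauto.
  - f_equal; apply IHb; auto. eapply FV_OutT; eauto.
  - f_equal. apply subst_notfree. intro F. destruct (@CL _ _ _ He F); auto.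
    apply IHb2; auto. eapply FV_OutS2; eauto.
  - f_equal. apply subst_notfree. intro F. destruct (@CL _ _ _ He F); auto.
    apply IHb2; auto. eapply FV_InS2; eauto.
  - f_equal. apply map_ext_in. intros [l y] Hin. simpl. f_equal.
    rewrite Forall_forall in H. apply (H _ Hin); auto. eapply FV_Ext; eauto.
  - f_equal. apply map_ext_in. intros [l y] Hin. simpl. f_equal.
    rewrite Forall_forall in H. apply (H _ Hin); auto. eapply FV_Int; eauto.
  - f_equal. rewrite (subst_notfree _ (t := cl e (Mu x0 b))).
    + apply IHb. rewrite map_app; apply in_or_app; auto. apply EC_Mu; auto. auto. apply FV_Mu; auto.
    + intro F. destruct (@CL _ _ _ He F); auto.
  - reflexivity.
Qed.

Lemma E4 e (b : term) : forall e2, EC e -> EC e2 -> FV e2 b -> dualE (e ++ e2) b = dualE e2 b.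
Proof.
  induction b using term_ind'; intros e2 He He2 Hf; simpl.
  - reflexivity.
  - f_equal; apply IHb; auto. eapply FV_InT; eauto.
  - f_equal; apply IHb; auto. eapply FV_OutT; eauto.
  - f_equal. rewrite cl_app. apply cl_closed. apply cl_closed_FV; auto. eapply FV_OutS1; eauto.
    apply IHb2; auto. eapply FV_OutS2; eauto.
  - f_equal. rewrite cl_app. apply cl_closed. apply cl_closed_FV; auto. eapply FV_InS1; eauto.
    apply IHb2; auto. eapply FV_InS2; eauto.
  - f_equal. apply map_ext_in. intros [l y] Hin. simpl. f_equal.
    rewrite Forall_forall in H. apply (H _ Hin); auto. eapply FV_Ext; eauto.
  - f_equal. apply map_ext_in. intros [l y] Hin. simpl. f_equal.
    rewrite Forall_forall in H. apply (H _ Hin); auto. eapply FV_Int; eauto.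
  - f_equal. rewrite cl_app. rewrite (cl_closed _ (t := cl e2 (Mu x b))).
    + rewrite <- app_assoc. apply IHb; auto. apply EC_Mu; auto. apply FV_Mu; auto.
    + apply cl_closed_FV; auto.
  - reflexivity.
Qed.

Lemma dualE_closed e (S : term) : EC e -> closedt S -> dualE e S = dual S.
Proof. intros He CS. unfold dual. rewrite <- (app_nil_r e). apply E4; auto.
  all: try (intros z F; exfalso; apply (CS z); auto). constructor. Qed.

Lemma EC_cons x (S : term) e : closedt S -> EC e -> EC ((x, S) :: e).
Proof. intros; constructor; auto. Qed.

Lemma G x S (b : term) : forall e, ~ In x (map fst e) -> EC e -> closedt S -> FV ((x, S) :: e) b ->
  subst x (dual S) (dualE ((x, S) :: e) b) = dualE e (subst x S b).
Proof.
  induction b using term_ind'; intros e Hx He CS Hf; simpl.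
  - reflexivity.
  - f_equal; apply IHb; auto. eapply FV_InT; eauto.
  - f_equal; apply IHb; auto. eapply FV_OutT; eauto.
  - f_equal.
    + rewrite subst_notfree. apply cl_comm; auto.
      apply (cl_closed_FV (e := (x, S) :: e)). apply EC_cons; auto. eapply FV_OutS1; eauto.
    + apply IHb2; auto. eapply FV_OutS2; eauto.
  - f_equal.
    + rewrite subst_notfree. apply cl_comm; auto.
      apply (cl_closed_FV (e := (x, S) :: e)). apply EC_cons; auto. eapply FV_InS1; eauto.
    + apply IHb2; auto. eapply FV_InS2; eauto.
  - f_equal. rewrite !map_map. apply map_ext_in. intros [l y] Hin. simpl. f_equal.
    rewrite Forall_forall in H. apply (H _ Hin); auto. eapply FV_Ext; eauto.
  - f_equal. rewrite !map_map. apply map_ext_in. intros [l y] Hin. simpl. f_equal.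
    rewrite Forall_forall in H. apply (H _ Hin); auto. eapply FV_Int; eauto.
  - destruct (Nat.eqb_spec x x0).
    + subst.
      assert (FVe : FV e (Mu x0 b)).
      { intros z Fz. destruct (Hf z Fz) as [E|I]; auto. simpl in E. subst.
        inversion Fz; subst. congruence. }
      simpl. f_equal.
      rewrite (subst_notfree _ (t := cl e (Mu x0 b))).
      * apply E2. rewrite map_app; apply in_or_app; right; left; auto.
        apply EC_Mu; auto. auto. apply FV_Mu; auto.
      * intro F. destruct (@CL _ _ _ He F) as [F1 _]. inversion F1; subst; congruence.
    + simpl. f_equal.
      assert (EX : subst x S (cl e (Mu x0 b)) = cl e (Mu x0 (subst x S b))).
      { rewrite cl_comm; auto. simpl. destruct (Nat.eqb_spec x x0); [congruence|]. reflexivity. }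
      rewrite EX. rewrite <- EX.
      change (subst x S (cl e (Mu x0 b))) with (cl ((x, S) :: e) (Mu x0 b)).
      replace (dualE (e ++ [(x0, cl e (Mu x0 (subst x S b)))]) (subst x S b))
        with (dualE (e ++ [(x0, cl ((x, S) :: e) (Mu x0 b))]) (subst x S b))
        by (simpl; rewrite EX; reflexivity).
      apply IHb.
      * rewrite map_app. simpl. intro I. apply in_app_or in I. destruct I as [I|[I|[]]]; auto.
      * unfold EC. apply Forall_app; split; auto. constructor; [|constructor]. simpl.
        apply (cl_closed_FV (e := (x, S) :: e)). apply EC_cons; auto. auto.
      * auto.
      * intros z Fz. simpl. rewrite map_app. simpl.
        destruct (Nat.eq_dec z x0). { right. apply in_or_app. right; left; auto. }
        assert (Fm : free z (Mu x0 b)) by (constructor; auto).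
        destruct (Hf z Fm) as [E|I]; auto. right; apply in_or_app; left; auto.
  - destruct (Nat.eqb_spec x x0).
    + subst. simpl. symmetry; apply dualE_closed; auto.
    + reflexivity.
Qed.

Lemma dual_unfold x (b : term) : closedt (Mu x b) ->
  subst x (dual (Mu x b)) (dualE [(x, Mu x b)] b) = dual (subst x (Mu x b) b).
Proof.
  intros C. unfold dual at 2. rewrite <- (G (e := [])); auto.
  - constructor.
  - intros z Fz. destruct (Nat.eq_dec z x). left; auto. exfalso; apply (C z); constructor; auto.
Qed.

Lemma dual_Mu x (b : term) : dual (Mu x b) = Mu x (dualE [(x, Mu x b)] b).
Proof. reflexivity. Qed.

Definition EW (e : list (nat * term)) := Forall (fun p => wfg (snd p)) e.

Lemma wfg_cl e (t : term) : EC e -> EW e -> wfg t -> wfg (cl e t).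
Proof. induction e as [|[y M] e IH]; simpl; intros H1 H2 W; auto.
  inversion H1; inversion H2; subst. apply wfg_subst; auto. Qed.

Lemma free_dualE z (b : term) : forall e, EC e -> FV e b -> free z (dualE e b) -> free z b.
Proof.
  induction b using term_ind'; intros e He Hf F; simpl in F; inversion F; subst.
  - constructor. eapply IHb; eauto. eapply FV_InT; eauto.
  - constructor. eapply IHb; eauto. eapply FV_OutT; eauto.
  - constructor. eapply (@CL e _ _ He); eauto.
  - apply F_OutS2. eapply IHb2; eauto. eapply FV_OutS2; eauto.
  - constructor. eapply (@CL e _ _ He); eauto.
  - apply F_InS2. eapply IHb2; eauto. eapply FV_InS2; eauto.
  - match goal with Hi : In _ (map _ _) |- _ => apply in_map_iff in Hi; destruct Hi as [[l' y] [E Hin]] end.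
    simpl in E; injection E; intros; subst.
    rewrite Forall_forall in H. eapply F_Ext; eauto. eapply (H _ Hin); eauto. eapply FV_Ext; eauto.
  - match goal with Hi : In _ (map _ _) |- _ => apply in_map_iff in Hi; destruct Hi as [[l' y] [E Hin]] end.
    simpl in E; injection E; intros; subst.
    rewrite Forall_forall in H. eapply F_Int; eauto. eapply (H _ Hin); eauto. eapply FV_Int; eauto.
  - constructor; auto. apply (IHb (e ++ [(x, cl e (Mu x b))])); auto. apply EC_Mu; auto. apply FV_Mu; auto.
  - constructor.
Qed.

Lemma ug_dualE z (b : term) : forall e, unguarded z (dualE e b) -> unguarded z b.
Proof. induction b using term_ind'; intros e U; simpl in U; inversion U; subst; constructor; eauto. Qed.

Lemma wfg_dualE (b : term) : forall e, EC e -> EW e -> FV e b -> wfg b -> wfg (dualE e b).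
Proof.
  induction b using term_ind'; intros e He Hw Hf W; simpl; inversion W; subst.
  - constructor.
  - constructor. apply IHb; auto. eapply FV_InT; eauto.
  - constructor. apply IHb; auto. eapply FV_OutT; eauto.
  - constructor. apply wfg_cl; auto. apply IHb2; auto. eapply FV_OutS2; eauto.
  - constructor. apply wfg_cl; auto. apply IHb2; auto. eapply FV_InS2; eauto.
  - constructor.
    + intro E. apply map_eq_nil in E; auto.
    + rewrite map_map; simpl. assumption.
    + rewrite Forall_forall in *. intros [l' s'] Hin. apply in_map_iff in Hin.
      destruct Hin as [[l2 s2] [E Hin]]. injection E; intros; subst. simpl.
      apply (H _ Hin); auto. eapply FV_Ext; eauto.
  - constructor.
    + intro E. apply map_eq_nil in E; auto.
    + rewrite map_map; simpl. assumption.
    + rewrite Forall_forall in *. intros [l' s'] Hin. apply in_map_iff in Hin.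
      destruct Hin as [[l2 s2] [E Hin]]. injection E; intros; subst. simpl.
      apply (H _ Hin); auto. eapply FV_Int; eauto.
  - constructor.
    + intro U. apply ug_dualE in U. auto.
    + apply IHb; auto. apply EC_Mu; auto.
      unfold EW. apply Forall_app; split; auto. constructor; [|constructor]. simpl. apply wfg_cl; auto.
      apply FV_Mu; auto.
  - constructor.
Qed.

Lemma SC_dual (s : term) : SC s -> SC (dual s).
Proof.
  intros [C W]. assert (FV [] s) by (intros z F; exfalso; apply (C z F)).
  split.
  - intros z F. apply (C z). eapply free_dualE; eauto. constructor.
  - apply wfg_dualE; auto; constructor.
Qed.

Lemma Ustar_trans a b c : Ustar a b -> Ustar b c -> Ustar a c.
Proof. induction 1; auto. intros; constructor; auto. Qed.

Lemma UU c d : (Ustar c d \/ Ustar d c) -> notMu c -> notMu d -> c = d.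
Proof. intros [H|H] N1 N2. symmetry; apply Ustar_notMu; auto. apply Ustar_notMu; auto. Qed.

Lemma UUstep c d x b : (Ustar c d \/ Ustar d c) -> c = Mu x b ->
  (Ustar (subst x (Mu x b) b) d \/ Ustar d (subst x (Mu x b) b)).
Proof.
  intros [H|H] E; subst.
  - inversion H; subst. right. constructor. constructor. auto.
  - right. eapply Ustar_trans; eauto. constructor. constructor.
Qed.

Local Notation Ach u v :=
  (v = u \/ exists (bs : list (L * term)) (l : L) (x : term), u = Int bs /\ In (l, x) bs /\ v = Int [(l, x)]).

Lemma Ach_single bs l (x : term) : Ach (Int bs) (Int [(l, x)]) -> In (l, x) bs.
Proof. intros [E|[bs' [l' [x' [E1 [Hi E2]]]]]].
  - injection E; intros; subst; left; auto.
  - injection E1; injection E2; intros; subst; auto. Qed.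

Lemma Ach_notInt u v : Ach u v -> (forall bs, u <> Int bs) -> v = u.
Proof. intros [E|[bs [l [x [E1 _]]]]] Hn; auto. exfalso; eapply Hn; eauto. Qed.

Lemma dual_notMu (c : term) : notMu c -> notMu (dual c).
Proof. destruct c; simpl; auto. Qed.

Lemma Ach_Mu u v x b : Ach u v -> v = Mu x b -> v = u.
Proof. intros [E|[bs [l [y [E1 [_ E2]]]]]] E3; auto. subst. discriminate. Qed.

Lemma in_map_dual l y (bs : list (L * term)) :
  In (l, y) (map (fun p => (fst p, dualE [] (snd p))) bs) -> exists x, In (l, x) bs /\ y = dual x.
Proof. intros H. apply in_map_iff in H. destruct H as [[l' x] [E H]]. simpl in E.
  injection E; intros; subst. eauto. Qed.

Lemma in_map_dual2 l x (bs : list (L * term)) :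
  In (l, x) bs -> In (l, dual x) (map (fun p => (fst p, dualE [] (snd p))) bs).
Proof. intros H. apply (in_map (fun p => (fst p, dualE [] (snd p)))) in H. exact H. Qed.

Lemma closed_SC (s : term) : SC s -> closedt s.
Proof. intros [C _]; exact C. Qed.

Lemma nm_tau_l : forall B0 (a : action BT L), matches leb B0 ATau a -> False.
Proof. simpl; auto. Qed.
Lemma nm_tau_r : forall B0 (a : action BT L), matches leb B0 a ATau -> False.
Proof. intros B0 a; destruct a; simpl; auto. Qed.
Lemma nm_check_l : forall B0 (a : action BT L), matches leb B0 ACheck a -> False.
Proof. simpl; auto. Qed.
Lemma nm_check_r : forall B0 (a : action BT L), matches leb B0 a ACheck -> False.
Proof. intros B0 a; destruct a; simpl; auto. Qed.
Ltac nomatch := exfalso; match goal with H : matches _ _ _ _ |- _ =>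
  first [ exact (@nm_tau_l _ _ H) | exact (@nm_tau_r _ _ H) | exact (@nm_check_l _ _ H) | exact (@nm_check_r _ _ H) ] end.

Lemma int_step_out (u : term) bs a1 a' : Ach (Int bs) u -> step u a1 a' -> a1 <> ATau ->
  exists l1, a1 = AOutL BT l1 /\ In (l1, a') bs.
Proof.
  intros [E|[bs0 [l0 [y [E1 [Hi E2]]]]]] Hs Hn; subst.
  - inversion Hs; subst. exists l. split; auto. left; auto. congruence.
  - injection E1; intros; subst. inversion Hs; subst. exists l0; auto. congruence.
Qed.

Section DualComp.
Variable B : term -> term -> Prop.
Hypothesis Brefl : forall s, SC s -> B s s.
Hypothesis leb_refl : forall t, leb t t.

Definition DR (a b : term) : Prop :=
  exists c d, SC c /\ SC d /\ (Ustar c d \/ Ustar d c) /\ Ach (dual c) a /\ Ach d b.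

Lemma SC_notVar x : ~ SC (Var BT L x).
Proof. intros [C _]. apply (C x). constructor. Qed.

Lemma DR_stuck a b : DR a b -> (forall a' b', ~ sys_tau leb B a b a' b') -> can_check a /\ can_check b.
Proof.
  intros [c [d [Sc [Sd [Ucd [Aa Ab]]]]]] Hst.
  destruct (classic (notMu c)) as [Nc|Nc].
  2:{ exfalso. destruct c; simpl in Nc; try tauto.
      apply Ach_notInt in Aa; [|intros ? E; discriminate E]. subst a. eapply Hst. apply Sys_L. rewrite dual_Mu. apply St_Mu. }
  destruct (classic (notMu d)) as [Nd|Nd].
  2:{ exfalso. destruct d; simpl in Nd; try tauto.
      apply Ach_notInt in Ab; [|intros ? E; discriminate E]. subst b. eapply Hst. apply Sys_R. apply St_Mu. }
  pose proof (UU Ucd Nc Nd); subst d.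
  destruct c; simpl in Aa.
  - apply Ach_notInt in Aa; [|intros ? E; discriminate E]. apply Ach_notInt in Ab; [|intros ? E; discriminate E]. subst.
    split; eexists; constructor.
  - apply Ach_notInt in Aa; [|intros ? E; discriminate E]. apply Ach_notInt in Ab; [|intros ? E; discriminate E]. subst.
    exfalso. eapply Hst. eapply Sys_Sync; [apply St_OutT|apply St_InT|simpl; auto].
  - apply Ach_notInt in Aa; [|intros ? E; discriminate E]. apply Ach_notInt in Ab; [|intros ? E; discriminate E]. subst.
    exfalso. eapply Hst. eapply Sys_Sync; [apply St_InT|apply St_OutT|simpl; auto].
  - apply Ach_notInt in Aa; [|intros ? E; discriminate E]. apply Ach_notInt in Ab; [|intros ? E; discriminate E]. subst.
    exfalso. eapply Hst. eapply Sys_Sync; [apply St_InS|apply St_OutS|simpl].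
    apply Brefl. eapply SC_OutS1; eauto.
  - apply Ach_notInt in Aa; [|intros ? E; discriminate E]. apply Ach_notInt in Ab; [|intros ? E; discriminate E]. subst.
    exfalso. eapply Hst. eapply Sys_Sync; [apply St_OutS|apply St_InS|simpl].
    apply Brefl. eapply SC_InS1; eauto.
  - apply Ach_notInt in Ab; [|intros ? E; discriminate E]. subst. exfalso.
    destruct Aa as [E|[bs0 [l0 [y [E1 [Hi E2]]]]]].
    + subst. destruct l as [|[l1 x] [|q bs1]].
      * destruct Sd as [_ W]; inversion W; auto.
      * eapply Hst. eapply Sys_Sync; [apply St_OutL|apply St_Ext; left; reflexivity|simpl; auto].
      * eapply Hst. apply Sys_L. apply St_IntTau. simpl; lia. left; reflexivity.
    + subst. injection E1; intros; subst. destruct (in_map_dual _ _ _ Hi) as [x [Hx Ex]]; subst.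
      eapply Hst. eapply Sys_Sync; [apply St_OutL|apply St_Ext; eauto|simpl; auto].
  - apply Ach_notInt in Aa; [|intros ? E; discriminate E]. subst. exfalso.
    destruct Ab as [E|[bs0 [l0 [x [E1 [Hi E2]]]]]].
    + subst. destruct l as [|[l1 x] [|q bs1]].
      * destruct Sd as [_ W]; inversion W; auto.
      * eapply Hst. eapply Sys_Sync; [apply St_Ext; left; reflexivity|apply St_OutL|simpl; auto].
      * eapply Hst. apply Sys_R. apply St_IntTau. simpl; lia. left; reflexivity.
    + subst. injection E1; intros; subst.
      eapply Hst. eapply Sys_Sync; [apply St_Ext; apply in_map_dual2; eauto|apply St_OutL|simpl; auto].
  - simpl in Nc; tauto.
  - exfalso; eapply SC_notVar; eauto.
Qed.

Lemma dual_notMu_inv (c : term) x body : dual c = Mu x body -> exists c0, c = Mu x c0 /\ body = dualE [(x, Mu x c0)] c0.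
Proof. destruct c; simpl; intros E; try discriminate. injection E; intros; subst. eauto. Qed.

Lemma DR_succ a b a' b' : DR a b -> sys_tau leb B a b a' b' -> DR a' b'.
Proof.
  intros [c [d [Sc [Sd [Ucd [Aa Ab]]]]]] Hs. inversion Hs; subst.
  -
    match goal with H : step a ATau a' |- _ => inversion H; subst end.
    + destruct Aa as [E|[bs0 [l0 [y [E1 [Hi E2]]]]]].
      * exists c, d; refine (conj _ (conj _ (conj _ (conj _ _)))); auto. right. exists bs, l, s. rewrite E. auto.
      * injection E2; intros; subst. simpl in *. lia.
    + pose proof (@Ach_Mu _ _ _ _ Aa eq_refl) as Ea. clear Aa. rename Ea into Aa.
      destruct (dual_notMu_inv _ (eq_sym Aa)) as [c0 [Ec Eb]]; subst.
      exists (subst x (Mu x c0) c0), d. refine (conj _ (conj _ (conj _ (conj _ _)))); auto.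
      * apply SC_unfold; auto.
      * eapply UUstep; eauto.
      * left. rewrite <- dual_unfold by (apply closed_SC; auto). rewrite Aa. reflexivity.
  - match goal with H : step b ATau b' |- _ => inversion H; subst end.
    + destruct Ab as [E|[bs0 [l0 [y [E1 [Hi E2]]]]]].
      * exists c, d; refine (conj _ (conj _ (conj _ (conj _ _)))); auto. right. exists bs, l, s. rewrite E. auto.
      * injection E2; intros; subst. simpl in *. lia.
    + pose proof (@Ach_Mu _ _ _ _ Ab eq_refl) as Ea. subst d.
      exists c, (subst x (Mu x s) s). refine (conj _ (conj _ (conj _ (conj _ _)))); auto.
      * apply SC_unfold; auto.
      * destruct Ucd as [U|U].
        -- left. eapply Ustar_trans; eauto. constructor. constructor.
        -- inversion U; subst; [left; constructor; constructor | right; auto].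
  -
    assert (Nc : notMu c).
    { destruct c; simpl; auto. apply Ach_notInt in Aa; [|intros ? E; discriminate E]. subst a.
      match goal with H : step (dual (Mu _ _)) _ _ |- _ => inversion H; subst end.
      nomatch. }
    assert (Nd : notMu d).
    { destruct d; simpl; auto. apply Ach_notInt in Ab; [|intros ? E; discriminate E]. subst b.
      match goal with H : step (Mu _ _) _ _ |- _ => inversion H; subst end.
      nomatch. }
    pose proof (UU Ucd Nc Nd); subst d.
    destruct c; simpl in Aa.
    + apply Ach_notInt in Aa; [|intros ? E; discriminate E]. subst. cbn [dual dualE cl fold_right] in *.
      match goal with H : step One _ _ |- _ => inversion H; subst end.
      nomatch.
    + apply Ach_notInt in Aa; [|intros ? E; discriminate E]. apply Ach_notInt in Ab; [|intros ? E; discriminate E]. subst. cbn [dual dualE cl fold_right] in *.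
      match goal with H : step (OutT _ _) _ _ |- _ => inversion H; subst end.
      match goal with H : step (InT _ _) _ _ |- _ => inversion H; subst end.
      match goal with |- DR _ ?y => exists y, y end; refine (conj _ (conj _ (conj _ (conj _ _)))); [eapply SC_InT; eauto|eapply SC_InT; eauto|left; constructor|left; reflexivity|left; reflexivity].
    + apply Ach_notInt in Aa; [|intros ? E; discriminate E]. apply Ach_notInt in Ab; [|intros ? E; discriminate E]. subst. cbn [dual dualE cl fold_right] in *.
      match goal with H : step (InT _ _) _ _ |- _ => inversion H; subst end.
      match goal with H : step (OutT _ _) _ _ |- _ => inversion H; subst end.
      match goal with |- DR _ ?y => exists y, y end; refine (conj _ (conj _ (conj _ (conj _ _)))); [eapply SC_OutT; eauto|eapply SC_OutT; eauto|left; constructor|left; reflexivity|left; reflexivity].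
    + apply Ach_notInt in Aa; [|intros ? E; discriminate E]. apply Ach_notInt in Ab; [|intros ? E; discriminate E]. subst. cbn [dual dualE cl fold_right] in *.
      match goal with H : step (InS _ _) _ _ |- _ => inversion H; subst end.
      match goal with H : step (OutS _ _) _ _ |- _ => inversion H; subst end.
      match goal with |- DR _ ?y => exists y, y end; refine (conj _ (conj _ (conj _ (conj _ _)))); [eapply SC_OutS2; eauto|eapply SC_OutS2; eauto|left; constructor|left; reflexivity|left; reflexivity].
    + apply Ach_notInt in Aa; [|intros ? E; discriminate E]. apply Ach_notInt in Ab; [|intros ? E; discriminate E]. subst. cbn [dual dualE cl fold_right] in *.
      match goal with H : step (OutS _ _) _ _ |- _ => inversion H; subst end.
      match goal with H : step (InS _ _) _ _ |- _ => inversion H; subst end.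
      match goal with |- DR _ ?y => exists y, y end; refine (conj _ (conj _ (conj _ (conj _ _)))); [eapply SC_InS2; eauto|eapply SC_InS2; eauto|left; constructor|left; reflexivity|left; reflexivity].
    +
      apply Ach_notInt in Ab; [|intros ? E; discriminate E]. subst b.
      match goal with H : step (Ext _) _ _ |- _ => inversion H; subst end.
      assert (Hin : exists l1, a1 = AOutL BT l1 /\ In (l1, a') (map (fun p => (fst p, dualE [] (snd p))) l)).
      { eapply int_step_out; eauto. intro; subst; nomatch. }
      destruct Hin as [l1 [E1 Hi]]; subst a1. simpl in *. subst l1.
      destruct (in_map_dual _ _ _ Hi) as [x [Hx Ex]]; subst a'.
      assert (x = b') by (eapply nodup_uniq; eauto; eapply SC_nodupE; eauto). subst x.
      exists b', b'; refine (conj _ (conj _ (conj _ (conj _ _)))); [eapply SC_Ext_in; eauto|eapply SC_Ext_in; eauto|left; constructor|left; auto|left; auto].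
    +
      apply Ach_notInt in Aa; [|intros ? E; discriminate E]. subst a. cbn [dual dualE] in *.
      match goal with H : step (Ext _) _ _ |- _ => inversion H; subst end.
      destruct (in_map_dual _ _ _ ltac:(eassumption)) as [x [Hx Ex]]; subst a'.
      assert (Hin : exists l1, a2 = AOutL BT l1 /\ In (l1, b') l).
      { eapply int_step_out; eauto. intro; subst; nomatch. }
      destruct Hin as [l1 [E1 Hi]]; subst a2. simpl in *. subst l1.
      assert (x = b') by (eapply nodup_uniq; eauto; eapply SC_nodupI; eauto). subst x.
      exists b', b'; refine (conj _ (conj _ (conj _ (conj _ _)))); [eapply SC_Int_in; eauto|eapply SC_Int_in; eauto|left; constructor|left; auto|left; auto].
    + simpl in Nc; tauto.
    + exfalso; eapply SC_notVar; eauto.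
Qed.

Lemma dual_complies (s : term) : SC s -> complies leb B (dual s) s.
Proof.
  intros H. exists DR. split.
  - intros a b Hab. split. apply DR_stuck; auto. intros; eapply DR_succ; eauto.
  - exists s, s; refine (conj _ (conj _ (conj _ (conj _ _)))); [auto|auto|left; constructor|left; auto|left; auto].
Qed.
End DualComp.

Lemma SC_One : SC (One : term).
Proof. split. intros z F; inversion F. constructor. Qed.
Lemma SC_mk_InT t (s : term) : SC s -> SC (InT t s).
Proof. intros [C W]; split. intros z F; inversion F; subst; eapply C; eauto. constructor; auto. Qed.
Lemma SC_mk_OutT t (s : term) : SC s -> SC (OutT t s).
Proof. intros [C W]; split. intros z F; inversion F; subst; eapply C; eauto. constructor; auto. Qed.
Lemma SC_mk_OutS (c s : term) : SC c -> SC s -> SC (OutS c s).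
Proof. intros [C1 W1] [C W]; split. intros z F; inversion F; subst; [eapply C1|eapply C]; eauto. constructor; auto. Qed.
Lemma SC_mk_InS (c s : term) : SC c -> SC s -> SC (InS c s).
Proof. intros [C1 W1] [C W]; split. intros z F; inversion F; subst; [eapply C1|eapply C]; eauto. constructor; auto. Qed.
Lemma SC_mk_Ext (bs : list (L * term)) : bs <> [] -> NoDup (map fst bs) -> (forall p, In p bs -> SC (snd p)) -> SC (Ext bs).
Proof. intros N D H; split.
  - intros z F; inversion F; subst. match goal with Hi : In _ bs |- _ => destruct (H _ Hi) as [C _] end. eapply C; eauto.
  - constructor; auto. rewrite Forall_forall; intros p Hp; apply H; auto. Qed.
Lemma SC_mk_Int (bs : list (L * term)) : bs <> [] -> NoDup (map fst bs) -> (forall p, In p bs -> SC (snd p)) -> SC (Int bs).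
Proof. intros N D H; split.
  - intros z F; inversion F; subst. match goal with Hi : In _ bs |- _ => destruct (H _ Hi) as [C _] end. eapply C; eauto.
  - constructor; auto. rewrite Forall_forall; intros p Hp; apply H; auto. Qed.
Lemma SC_ne_Ext (bs : list (L * term)) : SC (Ext bs) -> bs <> [].
Proof. intros [_ W]; inversion W; auto. Qed.
Lemma SC_ne_Int (bs : list (L * term)) : SC (Int bs) -> bs <> [].
Proof. intros [_ W]; inversion W; auto. Qed.

Definition brInT (F : term -> term -> term) (s r' : term) : term :=
  match nfo s with Some (OutT _ s1) => F r' s1 | _ => r' end.
Definition brOutT (F : term -> term -> term) (s r' : term) : term :=
  match nfo s with Some (InT _ s1) => F r' s1 | _ => r' end.
Definition brOutS (F : term -> term -> term) (s c r' : term) : term :=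
  match nfo s with Some (InS tau s1) => OutS tau (F r' s1) | _ => OutS c r' end.
Definition brInS (F : term -> term -> term) (s c r' : term) : term :=
  match nfo s with Some (OutS sg s1) => InS sg (F r' s1) | _ => InS c r' end.
Definition brExt (F : term -> term -> term) (s : term) (p : L * term) : term :=
  match nfo s with
  | Some (Int cs) => match lookup (fst p) cs with Some x => F (snd p) x | None => snd p end
  | _ => snd p end.
Definition brInt (F : term -> term -> term) (s : term) (p : L * term) : term :=
  match nfo s with
  | Some (Ext cs) => match lookup (fst p) cs with Some x => F (snd p) x | None => snd p end
  | _ => snd p end.

Fixpoint build (k : nat) (r s : term) : term :=
  match k with
  | 0 => dual s
  | S k' =>
    match r with
    | One => One
    | Var _ _ x => Var BT L x
    | Mu x b => build k' (subst x (Mu x b) b) s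
    | InT t r' => InT t (brInT (build k') s r')
    | OutT t r' => OutT t (brOutT (build k') s r')
    | OutS c r' => brOutS (build k') s c r'
    | InS c r' => brInS (build k') s c r'
    | Ext bs => Ext (map (fun p => (fst p, brExt (build k') s p)) bs)
    | Int bs => Int (map (fun p => (fst p, brInt (build k') s p)) bs)
    end
  end.

Lemma nfo_SC s t : nfo s = Some t -> SC s -> SC t.
Proof. intros E H. destruct (nfo_some _ E) as [U _]. eapply Ustar_SC; eauto. Qed.

Lemma SC_build k : forall r s, SC r -> SC s -> SC (build k r s).
Proof.
  induction k as [|k IH]; intros r s Hr Hs; simpl.
  - apply SC_dual; auto.
  - destruct r.
    + apply SC_One.
    + apply SC_mk_InT. unfold brInT. destruct (nfo s) as [t0|] eqn:En; [destruct t0|]; try (eapply SC_InT; eauto; fail).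
      apply IH. eapply SC_InT; eauto. eapply SC_OutT; eapply nfo_SC; eauto.
    + apply SC_mk_OutT. unfold brOutT. destruct (nfo s) as [t0|] eqn:En; [destruct t0|]; try (eapply SC_OutT; eauto; fail).
      apply IH. eapply SC_OutT; eauto. eapply SC_InT; eapply nfo_SC; eauto.
    + unfold brOutS. destruct (nfo s) as [t0|] eqn:En; [destruct t0|]; try (exact Hr).
      apply SC_mk_OutS. eapply SC_InS1; eapply nfo_SC; eauto.
      apply IH. eapply SC_OutS2; eauto. eapply SC_InS2; eapply nfo_SC; eauto.
    + unfold brInS. destruct (nfo s) as [t0|] eqn:En; [destruct t0|]; try (exact Hr).
      apply SC_mk_InS. eapply SC_OutS1; eapply nfo_SC; eauto.
      apply IH. eapply SC_InS2; eauto. eapply SC_OutS2; eapply nfo_SC; eauto.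
    + apply SC_mk_Ext.
      * intro E; apply map_eq_nil in E. eapply SC_ne_Ext; eauto.
      * rewrite map_map; simpl. eapply SC_nodupE; eauto.
      * intros p Hp. apply in_map_iff in Hp. destruct Hp as [[l0 x0] [E Hp]]; subst; simpl.
        assert (Sx : SC x0) by (eapply SC_Ext_in; eauto).
        unfold brExt. destruct (nfo s) as [t0|] eqn:En; [destruct t0|]; simpl; auto.
        destruct (lookup l0 l1) eqn:El; auto. apply IH; auto.
        eapply SC_Int_in. eapply nfo_SC; eauto. apply lookup_some; eauto.
    + apply SC_mk_Int.
      * intro E; apply map_eq_nil in E. eapply SC_ne_Int; eauto.
      * rewrite map_map; simpl. eapply SC_nodupI; eauto.
      * intros p Hp. apply in_map_iff in Hp. destruct Hp as [[l0 x0] [E Hp]]; subst; simpl.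
        assert (Sx : SC x0) by (eapply SC_Int_in; eauto).
        unfold brInt. destruct (nfo s) as [t0|] eqn:En; [destruct t0|]; simpl; auto.
        destruct (lookup l0 l1) eqn:El; auto. apply IH; auto.
        eapply SC_Ext_in. eapply nfo_SC; eauto. apply lookup_some; eauto.
    + apply IH; auto. apply SC_unfold; auto.
    + exfalso; eapply SC_notVar; eauto.
Qed.

Lemma comp_stuck B0 (a b : term) : complies leb B0 a b ->
  (forall a' b', ~ sys_tau leb B0 a b a' b') -> can_check a /\ can_check b.
Proof. intros [R [HR H]] Hs. exact (proj1 (HR _ _ H) Hs). Qed.

Lemma comp_succ B0 (a b a' b' : term) : complies leb B0 a b -> sys_tau leb B0 a b a' b' -> complies leb B0 a' b'.
Proof. intros [R [HR H]] Hs. exists R; split; auto. exact (proj2 (HR _ _ H) _ _ Hs). Qed.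

Lemma comp_Tstar B0 (r s s' : term) : complies leb B0 r s -> Tstar s s' -> complies leb B0 r s'.
Proof. intros C T; revert C; induction T; auto. intros C. apply IHT. eapply comp_succ; eauto. apply Sys_R; auto. Qed.

Lemma check_One (r : term) : can_check r -> r = One.
Proof. intros [r' H]; inversion H; auto. Qed.

Lemma nfo_T s s' : Tstar s s' -> notMu s' ->
  exists t, nfo s = Some t /\ (s' = t \/ exists bs l x, t = Int bs /\ In (l, x) bs /\ s' = Int [(l, x)]).
Proof. intros T N. destruct (K_lemma T N) as [t [U [Nt E]]]. exists t; split; auto. apply nfo_eq; auto. Qed.

Lemma nfo_T_eq s s' : Tstar s s' -> notMu s' -> (forall bs, s' <> Int bs) -> nfo s = Some s'.
Proof. intros T N Hn. destruct (nfo_T T N) as [t [E [E2|[bs [l [x [_ [_ E3]]]]]]]]; subst; auto.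
  exfalso; eapply Hn; eauto. Qed.

Lemma nfo_T_single s l (x : term) : Tstar s (Int [(l, x)]) ->
  exists cs, nfo s = Some (Int cs) /\ In (l, x) cs.
Proof. intros T. destruct (nfo_T T I) as [t [E [E2|[bs [l' [x' [E3 [Hi E4]]]]]]]].
  - subst. exists [(l, x)]; split; auto. left; auto.
  - subst. injection E4; intros; subst. eauto. Qed.

Lemma nfo_complies B0 (r s t : term) : complies leb B0 r s -> nfo s = Some t -> complies leb B0 r t.
Proof. intros C E. destruct (nfo_some _ E) as [U _]. eapply comp_Tstar; eauto. apply Ustar_Tstar; auto. Qed.

Definition ustep (u : term) a v : Prop := forall a' v', step u a' v' -> a' = a /\ v' = v.

Lemma pair_sync B0 (r t : term) a1 r1 a2 t1 : complies leb B0 r t -> ustep r a1 r1 -> ustep t a2 t1 ->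
  a1 <> ATau -> a2 <> ATau -> ~ can_check r -> matches leb B0 a1 a2.
Proof.
  intros C U1 U2 N1 N2 Nc. apply NNPP; intro Nm. apply Nc. apply (comp_stuck C).
  intros a' b' H; inversion H; subst.
  - destruct (U1 _ _ H0); congruence.
  - destruct (U2 _ _ H0); congruence.
  - destruct (U1 _ _ H0); destruct (U2 _ _ H1); subst; auto.
Qed.

Lemma ustep_InT t (s : term) : ustep (InT t s) (AInT L t) s.
Proof. intros a v H; inversion H; auto. Qed.
Lemma ustep_OutT t (s : term) : ustep (OutT t s) (AOutT L t) s.
Proof. intros a v H; inversion H; auto. Qed.
Lemma ustep_InS (c s : term) : ustep (InS c s) (AInS c) s.
Proof. intros a v H; inversion H; auto. Qed.
Lemma ustep_OutS (c s : term) : ustep (OutS c s) (AOutS c) s.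
Proof. intros a v H; inversion H; auto. Qed.
Lemma ustep_single l (s : term) : ustep (Int [(l, s)]) (AOutL BT l) s.
Proof. intros a v H; inversion H; subst; auto. simpl in *; lia. Qed.

Lemma ustep_stuck B0 (X Y : term) a1 X1 a2 Y1 : ustep X a1 X1 -> ustep Y a2 Y1 ->
  a1 <> ATau -> a2 <> ATau -> ~ matches leb B0 a1 a2 -> forall a' b', ~ sys_tau leb B0 X Y a' b'.
Proof.
  intros U1 U2 N1 N2 Nm a' b' H; inversion H; subst.
  - destruct (U1 _ _ H0); congruence.
  - destruct (U2 _ _ H0); congruence.
  - destruct (U1 _ _ H0); destruct (U2 _ _ H1); subst; auto.
Qed.

Lemma no_check_InT t (s : term) : ~ can_check (InT t s).
Proof. intros H; apply check_One in H; discriminate. Qed.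
Lemma no_check_OutT t (s : term) : ~ can_check (OutT t s).
Proof. intros H; apply check_One in H; discriminate. Qed.
Lemma no_check_InS (c s : term) : ~ can_check (InS c s).
Proof. intros H; apply check_One in H; discriminate. Qed.
Lemma no_check_OutS (c s : term) : ~ can_check (OutS c s).
Proof. intros H; apply check_One in H; discriminate. Qed.
Lemma no_check_Int bs : ~ can_check (Int bs : term).
Proof. intros H; apply check_One in H; discriminate. Qed.
Lemma no_check_Ext bs : ~ can_check (Ext bs : term).
Proof. intros H; apply check_One in H; discriminate. Qed.

Lemma brOutS_shape F (s c r' : term) : exists p q, brOutS F s c r' = OutS p q.
Proof. unfold brOutS. destruct (nfo s) as [[]|]; eauto. Qed.
Lemma brInS_shape F (s c r' : term) : exists p q, brInS F s c r' = InS p q.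
Proof. unfold brInS. destruct (nfo s) as [[]|]; eauto. Qed.

Inductive BadRun (B0 : term -> term -> Prop) : nat -> term -> term -> Prop :=
| BR0 a b : (forall a' b', ~ sys_tau leb B0 a b a' b') -> ~ (can_check a /\ can_check b) -> BadRun B0 0 a b
| BRS n a b a' b' : sys_tau leb B0 a b a' b' -> BadRun B0 n a' b' -> BadRun B0 (S n) a b.

Lemma bad_exists B0 (a b : term) : ~ complies leb B0 a b -> exists n, BadRun B0 n a b.
Proof.
  intros H. apply NNPP; intro Hn. apply H.
  exists (fun x y => ~ exists n, BadRun B0 n x y). split.
  - intros x y Hxy. split.
    + intros Hst. apply NNPP; intro Nc. apply Hxy. exists 0. constructor; auto.
    + intros x' y' Hs Hb. apply Hxy. destruct Hb as [n Hb]. exists (S n). econstructor; eauto.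
  - intros [n Hb]. apply Hn. eauto.
Qed.

Lemma comp_bad B0 n (a b : term) : BadRun B0 n a b -> complies leb B0 a b -> False.
Proof.
  induction 1; intros C.
  - apply H0. apply (comp_stuck C). auto.
  - apply IHBadRun. eapply comp_succ; eauto.
Qed.

Lemma comp_int_single B0 (r : term) cs l x : complies leb B0 r (Int cs) -> In (l, x) cs -> complies leb B0 r (Int [(l, x)]).
Proof.
  intros C Hi. destruct cs as [|p [|q cs']].
  - destruct Hi.
  - destruct Hi as [E|[]]; subst; auto.
  - eapply comp_succ; [exact C|]. apply Sys_R. apply St_IntTau; auto. simpl; lia.
Qed.

Section Main.
Variables B B' : term -> term -> Prop.
Hypothesis Brefl : forall s, SC s -> B s s.
Hypothesis leb_refl : forall t, leb t t.
Hypothesis BB' : forall x y, B x y -> B' x y.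
Hypothesis B'trans : forall x y z, B' x y -> B' y z -> B' x z.

Definition Inv (X s' : term) : Prop :=
  complies leb B X s' \/
  exists k r s, X = build k r s /\ complies leb B' r s /\ SC r /\ SC s /\ Tstar s s'.

Lemma Tstar_snoc s s' s'' : Tstar s s' -> step s' ATau s'' -> Tstar s s''.
Proof. intros T H. eapply Tstar_trans; eauto. econstructor; eauto. constructor. Qed.

Ltac invR := right; eexists; eexists; eexists; split; [reflexivity|];
  split; [eassumption|]; split; [eassumption|]; split; [eassumption|];
  eapply Tstar_snoc; eassumption.

Ltac invsys H := inversion H as [? ? ? Hx | ? ? ? Hx | ? ? ? ? a1 a2 Hx1 Hx2 Hm]; subst.

Lemma InvA k : forall r s s', complies leb B' r s -> SC r -> SC s -> Tstar s s' ->
  ((forall a' b', ~ sys_tau leb B (build k r s) s' a' b') -> can_check (build k r s) /\ can_check s') /\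
  (forall a' b', sys_tau leb B (build k r s) s' a' b' -> Inv a' b').
Proof.
  induction k as [|k IH]; intros r s s' Cr0 Sr Ss T.
  { simpl. assert (D : complies leb B (dual s) s') by (eapply comp_Tstar; [eapply dual_complies; eauto|exact T]).
    split. apply comp_stuck; auto. intros; left; eapply comp_succ; eauto. }
  assert (Cr : complies leb B' r s') by (eapply comp_Tstar; eauto).
  assert (Ss' : SC s') by (eapply Tstar_SC; eauto).
  destruct r as [ | t r' | t r' | c r' | c r' | bs | bs | x b | x ].
  -
    split.
    + intros Hst. apply (comp_stuck Cr). intros a' b' H. invsys H.
      * inversion Hx.
      * eapply Hst. apply Sys_R; eauto.
      * inversion Hx1; subst. nomatch.
    + intros a' b' H. invsys H.
      * inversion Hx.
      * invR.
      * inversion Hx1; subst. nomatch.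
  -
    split.
    + intros Hst. exfalso.
      destruct (classic (exists a' b', sys_tau leb B' (InT t r') s' a' b')) as [[a' [b' Hm0]]|Hn].
      2:{ apply (@no_check_InT t r'). apply (comp_stuck Cr). intros a' b' H; apply Hn; eauto. }
      invsys Hm0.
      * inversion Hx.
      * eapply Hst. apply Sys_R; eauto.
      * inversion Hx1; subst.
        eapply Hst. eapply Sys_Sync; [apply St_InT|eassumption|].
        destruct a2; simpl in *; auto.
    + intros a' b' H. invsys H.
      * inversion Hx.
      * invR.
      * inversion Hx1; subst.
        destruct a2; simpl in Hm; try contradiction.
        inversion Hx2; subst.
        match type of T with Tstar _ ?sp => assert (En : nfo s = Some sp) by (apply nfo_T_eq; [exact T | exact I | intros ? E; discriminate E]) end.
        right. exists k, r'. eexists. split; [unfold brInT; rewrite En; reflexivity|].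
        split; [|split; [eapply SC_InT; eauto|split; [eapply SC_OutT; eauto|constructor]]].
        eapply comp_succ; [exact Cr|]. eapply Sys_Sync; [apply St_InT|apply St_OutT|simpl; auto].
  -
    split.
    + intros Hst. exfalso.
      destruct (classic (exists a' b', sys_tau leb B' (OutT t r') s' a' b')) as [[a' [b' Hm0]]|Hn].
      2:{ apply (@no_check_OutT t r'). apply (comp_stuck Cr). intros a' b' H; apply Hn; eauto. }
      invsys Hm0.
      * inversion Hx.
      * eapply Hst. apply Sys_R; eauto.
      * inversion Hx1; subst.
        eapply Hst. eapply Sys_Sync; [apply St_OutT|eassumption|].
        destruct a2; simpl in *; auto.
    + intros a' b' H. invsys H.
      * inversion Hx.
      * invR.
      * inversion Hx1; subst.
        destruct a2; simpl in Hm; try contradiction.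
        inversion Hx2; subst.
        match type of T with Tstar _ ?sp => assert (En : nfo s = Some sp) by (apply nfo_T_eq; [exact T | exact I | intros ? E; discriminate E]) end.
        right. exists k, r'. eexists. split; [unfold brOutT; rewrite En; reflexivity|].
        split; [|split; [eapply SC_OutT; eauto|split; [eapply SC_InT; eauto|constructor]]].
        eapply comp_succ; [exact Cr|]. eapply Sys_Sync; [apply St_OutT|apply St_InT|simpl; auto].
  -
    split.
    + intros Hst. exfalso.
      destruct (classic (exists a' b', sys_tau leb B' (OutS c r') s' a' b')) as [[a' [b' Hm0]]|Hn].
      2:{ apply (@no_check_OutS c r'). apply (comp_stuck Cr). intros a' b' H; apply Hn; eauto. }
      invsys Hm0.
      * inversion Hx.
      * eapply Hst. apply Sys_R; eauto.
      * inversion Hx1; subst. destruct a2; simpl in Hm; try contradiction.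
        inversion Hx2; subst.
        match type of T with Tstar _ ?sp => assert (En : nfo s = Some sp) by (apply nfo_T_eq; [exact T | exact I | intros ? E; discriminate E]) end.
        eapply Hst. simpl. unfold brOutS. rewrite En. eapply Sys_Sync; [apply St_OutS|apply St_InS|simpl].
        apply Brefl. eapply SC_InS1; eauto.
    + intros a' b' H. destruct (brOutS_shape (build k) s c r') as [p [q Eb]]. invsys H.
      * simpl in Hx. rewrite Eb in Hx. inversion Hx.
      * invR.
      * simpl in Hx1. rewrite Eb in Hx1. inversion Hx1; subst.
        destruct a2; simpl in Hm; try contradiction.
        inversion Hx2; subst.
        match type of T with Tstar _ ?sp => assert (En : nfo s = Some sp) by (apply nfo_T_eq; [exact T | exact I | intros ? E; discriminate E]) end.
        unfold brOutS in Eb. rewrite En in Eb. injection Eb; intros; subst.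
        right. exists k, r'. eexists. split; [reflexivity|].
        split; [|split; [eapply SC_OutS2; eauto|split; [eapply SC_InS2; eauto|constructor]]].
        eapply comp_succ; [exact Cr|]. eapply Sys_Sync; [apply St_OutS|apply St_InS|].
        eapply pair_sync; [exact Cr|apply ustep_OutS|apply ustep_InS|discriminate|discriminate|apply no_check_OutS].
  -
    split.
    + intros Hst. exfalso.
      destruct (classic (exists a' b', sys_tau leb B' (InS c r') s' a' b')) as [[a' [b' Hm0]]|Hn].
      2:{ apply (@no_check_InS c r'). apply (comp_stuck Cr). intros a' b' H; apply Hn; eauto. }
      invsys Hm0.
      * inversion Hx.
      * eapply Hst. apply Sys_R; eauto.
      * inversion Hx1; subst. destruct a2; simpl in Hm; try contradiction.
        inversion Hx2; subst.
        match type of T with Tstar _ ?sp => assert (En : nfo s = Some sp) by (apply nfo_T_eq; [exact T | exact I | intros ? E; discriminate E]) end.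
        eapply Hst. simpl. unfold brInS. rewrite En. eapply Sys_Sync; [apply St_InS|apply St_OutS|simpl].
        apply Brefl. eapply SC_OutS1; eauto.
    + intros a' b' H. destruct (brInS_shape (build k) s c r') as [p [q Eb]]. invsys H.
      * simpl in Hx. rewrite Eb in Hx. inversion Hx.
      * invR.
      * simpl in Hx1. rewrite Eb in Hx1. inversion Hx1; subst.
        destruct a2; simpl in Hm; try contradiction.
        inversion Hx2; subst.
        match type of T with Tstar _ ?sp => assert (En : nfo s = Some sp) by (apply nfo_T_eq; [exact T | exact I | intros ? E; discriminate E]) end.
        unfold brInS in Eb. rewrite En in Eb. injection Eb; intros; subst.
        right. exists k, r'. eexists. split; [reflexivity|].
        split; [|split; [eapply SC_InS2; eauto|split; [eapply SC_OutS2; eauto|constructor]]].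
        eapply comp_succ; [exact Cr|]. eapply Sys_Sync; [apply St_InS|apply St_OutS|].
        eapply pair_sync; [exact Cr|apply ustep_InS|apply ustep_OutS|discriminate|discriminate|apply no_check_InS].
  -
    split.
    + intros Hst. exfalso.
      destruct (classic (exists a' b', sys_tau leb B' (Ext bs) s' a' b')) as [[a' [b' Hm0]]|Hn].
      2:{ apply (@no_check_Ext bs). apply (comp_stuck Cr). intros a' b' H; apply Hn; eauto. }
      invsys Hm0.
      * inversion Hx.
      * eapply Hst. apply Sys_R; eauto.
      * inversion Hx1; subst. destruct a2; simpl in Hm; try contradiction. subst.
        eapply Hst. simpl. eapply Sys_Sync; [apply St_Ext|exact Hx2|simpl; reflexivity].
        apply in_map_iff. exists (l0, a'); split; [reflexivity|eassumption].
    + intros a' b' H. invsys H.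
      * inversion Hx.
      * invR.
      * inversion Hx1; subst.
        match goal with Hi : In _ (map _ _) |- _ => apply in_map_iff in Hi; destruct Hi as [[l1 r1] [E Hin]] end.
        simpl in E; injection E as E1 E2. subst l a'.
        destruct a2; simpl in Hm; try contradiction. subst.
        inversion Hx2; subst.
        destruct (nfo_T_single T) as [cs [En Hcs]].
        assert (Scs : SC (Int cs)) by (eapply nfo_SC; eauto).
        assert (El : lookup l cs = Some b') by (apply lookup_eq; auto; eapply SC_nodupI; eauto).
        right. exists k, r1, b'. split; [unfold brExt; rewrite En; simpl; rewrite El; reflexivity|].
        split; [|split; [eapply SC_Ext_in; eauto|split; [eapply step_SC; eauto|constructor]]].
        eapply comp_succ; [exact Cr|]. eapply Sys_Sync; [apply St_Ext; eauto|apply St_OutL|simpl; reflexivity].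
  -
    split.
    + intros Hst. exfalso.
      destruct (classic (exists a' b', sys_tau leb B' (Int bs) s' a' b')) as [[a' [b' Hm0]]|Hn].
      2:{ apply (@no_check_Int bs). apply (comp_stuck Cr). intros a' b' H; apply Hn; eauto. }
      invsys Hm0.
      * inversion Hx; subst. eapply Hst. simpl. apply Sys_L. apply St_IntTau.
        rewrite length_map; auto. apply in_map_iff. exists (l, s0); split; [reflexivity|eassumption].
      * eapply Hst. apply Sys_R; eauto.
      * inversion Hx1; subst; [|nomatch]. destruct a2; simpl in Hm; try contradiction. subst.
        eapply Hst. simpl. eapply Sys_Sync; [apply St_OutL|exact Hx2|simpl; reflexivity].
    + intros a' b' H. invsys H.
      * inversion Hx; subst.
        match goal with Hi : In _ (map _ _) |- _ => apply in_map_iff in Hi; destruct Hi as [[l1 r1] [E Hin]] end.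
        simpl in E; injection E as E1 E2. subst l s0.
        right. exists (S k), (Int [(l1, r1)]), s. split; [reflexivity|].
        split; [|split; [eapply SC_Int_single; eauto|split; [exact Ss|exact T]]].
        eapply comp_succ; [exact Cr0|]. apply Sys_L. apply St_IntTau; auto.
        rewrite length_map in *; auto.
      * invR.
      * inversion Hx1; subst; [|nomatch].
        destruct bs as [|[l1 r1] [|q bs1]]; simpl in *; try discriminate.
        match goal with E : [_] = [_] |- _ => injection E; intros; subst end.
        destruct a2; simpl in Hm; try contradiction. subst.
        inversion Hx2; subst.
        match type of T with Tstar _ ?sp => assert (En : nfo s = Some sp) by (apply nfo_T_eq; [exact T | exact I | intros ? E; discriminate E]) end.
        assert (Scs : SC (Ext bs)) by (eapply nfo_SC; eauto).
        assert (El : lookup l bs = Some b') by (apply lookup_eq; auto; eapply SC_nodupE; eauto).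
        right. exists k, r1, b'. split; [unfold brInt; rewrite En; simpl; rewrite El; reflexivity|].
        split; [|split; [eapply SC_Int_in; [eauto|left; reflexivity]|split; [eapply step_SC; eauto|constructor]]].
        eapply comp_succ; [exact Cr|]. eapply Sys_Sync; [apply St_OutL|apply St_Ext; eauto|simpl; reflexivity].
  - simpl. apply IH; auto.
    + eapply comp_succ; [exact Cr0|]. apply Sys_L. apply St_Mu.
    + apply SC_unfold; auto.
  - exfalso; eapply SC_notVar; eauto.
Qed.

Lemma Inv_rel : compliance_rel leb B Inv.
Proof.
  intros X s' [HC|[k [r [s [E [C [Sr [Ss T]]]]]]]].
  - split. apply comp_stuck; auto. intros; left; eapply comp_succ; eauto.
  - subst X. apply InvA; auto.
Qed.

Lemma LemA k (r s : term) : complies leb B' r s -> SC r -> SC s -> complies leb B (build k r s) s.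
Proof. intros C Sr Ss. exists Inv. split. apply Inv_rel. right. exists k, r, s. refine (conj eq_refl (conj C (conj Sr (conj Ss (T_refl s))))). Qed.

Lemma matches_mono a1 a2 : matches leb B a1 a2 -> matches leb B' a1 a2.
Proof. destruct a1; destruct a2; simpl; auto. Qed.

Lemma sys_mono (a b a' b' : term) : sys_tau leb B a b a' b' -> sys_tau leb B' a b a' b'.
Proof. intros H; inversion H; subst. apply Sys_L; auto. apply Sys_R; auto.
  eapply Sys_Sync; eauto. apply matches_mono; auto. Qed.

Lemma move_transfer k (r s s2 X' s2' : term) : 0 < k -> complies leb B' r s -> SC r -> SC s ->
  sys_tau leb B (build k r s) s2 X' s2' -> exists r' s2'', sys_tau leb B' r s2 r' s2''.
Proof.
  intros Hk C Sr Ss H. destruct k as [|k]; [lia|].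
  destruct r as [ | t r' | t r' | c r' | c r' | bs | bs | x b | x ]; simpl in H.
  - invsys H. inversion Hx. eexists; eexists; apply Sys_R; eauto. inversion Hx1; subst; nomatch.
  - invsys H. inversion Hx. eexists; eexists; apply Sys_R; eauto.
    inversion Hx1; subst. eexists; eexists; eapply Sys_Sync; [apply St_InT|exact Hx2|destruct a2; simpl in *; auto].
  - invsys H. inversion Hx. eexists; eexists; apply Sys_R; eauto.
    inversion Hx1; subst. eexists; eexists; eapply Sys_Sync; [apply St_OutT|exact Hx2|destruct a2; simpl in *; auto].
  - unfold brOutS in H. destruct (nfo s) as [t0|] eqn:En; [destruct t0|];
      try (eexists; eexists; eapply sys_mono; exact H).
    invsys H. inversion Hx. eexists; eexists; apply Sys_R; eauto.
    inversion Hx1; subst. destruct a2; simpl in Hm; try contradiction.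
    eexists; eexists; eapply Sys_Sync; [apply St_OutS|exact Hx2|simpl].
    apply B'trans with t0_1; [|apply BB'; auto].
    eapply pair_sync with (a1 := AOutS c) (a2 := AInS t0_1);
      [eapply nfo_complies; eauto|apply ustep_OutS|apply ustep_InS|discriminate|discriminate|apply no_check_OutS].
  - unfold brInS in H. destruct (nfo s) as [t0|] eqn:En; [destruct t0|];
      try (eexists; eexists; eapply sys_mono; exact H).
    invsys H. inversion Hx. eexists; eexists; apply Sys_R; eauto.
    inversion Hx1; subst. destruct a2; simpl in Hm; try contradiction.
    eexists; eexists; eapply Sys_Sync; [apply St_InS|exact Hx2|simpl].
    apply B'trans with t0_1; [apply BB'; auto|].
    eapply pair_sync with (a1 := AInS c) (a2 := AOutS t0_1);
      [eapply nfo_complies; eauto|apply ustep_InS|apply ustep_OutS|discriminate|discriminate|apply no_check_InS].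
  - invsys H. inversion Hx. eexists; eexists; apply Sys_R; eauto.
    inversion Hx1; subst.
    match goal with Hi : In _ (map _ _) |- _ => apply in_map_iff in Hi; destruct Hi as [[l1 r1] [E Hin]] end.
    simpl in E; injection E as E1 E2. subst.
    destruct a2; simpl in Hm; try contradiction. subst.
    eexists; eexists; eapply Sys_Sync; [apply St_Ext; eassumption|exact Hx2|simpl; auto].
  - invsys H.
    + inversion Hx; subst.
      match goal with Hi : In _ (map _ _) |- _ => apply in_map_iff in Hi; destruct Hi as [[l1 r1] [E Hin]] end.
      eexists; eexists; apply Sys_L; apply St_IntTau; [rewrite length_map in *; auto|eassumption].
    + eexists; eexists; apply Sys_R; eauto.
    + inversion Hx1; subst; [|nomatch].
      destruct bs as [|[l1 r1] [|q bs1]]; simpl in *; try discriminate.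
      destruct a2; simpl in Hm; try contradiction.
      match goal with E : [_] = [_] |- _ => injection E; intros; subst end.
      eexists; eexists; eapply Sys_Sync; [apply St_OutL|exact Hx2|simpl; auto].
  - eexists; eexists; apply Sys_L; apply St_Mu.
  - exfalso; eapply SC_notVar; eauto.
Qed.

Lemma build_check k (r s : term) : 0 < k -> SC r -> can_check (build k r s) -> r = One \/ exists x b, r = Mu x b.
Proof.
  intros Hk Sr Hc. destruct k as [|k]; [lia|]. apply check_One in Hc.
  destruct r; simpl in Hc; try discriminate; eauto.
  all: try (destruct (brOutS_shape (build k) s r1 r2) as [p [q E]]; rewrite E in Hc; discriminate).
  all: try (destruct (brInS_shape (build k) s r1 r2) as [p [q E]]; rewrite E in Hc; discriminate).
  all: exfalso; eapply SC_notVar; eauto.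
Qed.

Definition SimR (X r : term) (n : nat) : Prop :=
  X = r \/ exists k s, X = build k r s /\ n < k /\ complies leb B' r s /\ SC r /\ SC s.

Ltac simR_live k s1 :=
  right; exists k, s1; split; [reflexivity|]; split; [lia|].

Lemma sim_step n (X r s2 r1 s2' : term) : SimR X r (S n) -> complies leb B X s2 ->
  sys_tau leb B' r s2 r1 s2' -> exists X1, SimR X1 r1 n /\ complies leb B X1 s2'.
Proof.
  intros [E | [k [s [E [Hk [C [Sr Ss]]]]]]] CX H.
  - subst X. destruct (classic (sys_tau leb B r s2 r1 s2')) as [HB|HnB].
    + exists r1. split; [left; auto| eapply comp_succ; eauto].
    + exfalso. invsys H.
      * apply HnB; apply Sys_L; auto.
      * apply HnB; apply Sys_R; auto.
      * assert (Nm : ~ matches leb B a1 a2) by (intro; apply HnB; eapply Sys_Sync; eauto).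
        destruct a1; destruct a2; simpl in Hm, Nm; try contradiction; try tauto.
        -- inversion Hx1; subst. inversion Hx2; subst.
           apply (@no_check_OutS t r1). apply (comp_stuck CX).
           eapply ustep_stuck; [apply ustep_OutS|apply ustep_InS|discriminate|discriminate|exact Nm].
        -- inversion Hx1; subst. inversion Hx2; subst.
           apply (@no_check_InS t r1). apply (comp_stuck CX).
           eapply ustep_stuck; [apply ustep_InS|apply ustep_OutS|discriminate|discriminate|exact Nm].
  - subst X. destruct k as [|k']; [lia|]. invsys H.
    + inversion Hx; subst.
      * exists (build (S k') (Int [(l, s0)]) s). split.
        -- simR_live (S k') s.
           split; [eapply comp_succ; [exact C|apply Sys_L; apply St_IntTau; auto]|].
           split; [eapply SC_Int_single; eauto|auto].
        -- eapply comp_succ; [exact CX|]. apply Sys_L. simpl. apply St_IntTau.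
           rewrite length_map; auto. apply in_map_iff. exists (l, s0); split; [reflexivity|auto].
      * exists (build k' (subst x (Mu x s0) s0) s). split.
        -- simR_live k' s.
           split; [eapply comp_succ; [exact C|apply Sys_L; apply St_Mu]|].
           split; [apply SC_unfold; auto|auto].
        -- exact CX.
    + exists (build (S k') r1 s). split.
      * simR_live (S k') s. auto.
      * eapply comp_succ; [exact CX|apply Sys_R; auto].
    + destruct r as [ | t r' | t r' | c r' | c r' | bs | bs | x b | x ].
      * inversion Hx1; subst; nomatch.
      * inversion Hx1; subst. destruct a2; simpl in Hm; try contradiction.
        exists (brInT (build k') s r1). split.
        -- unfold brInT. destruct (nfo s) as [t0|] eqn:En; [destruct t0|]; try (left; reflexivity).
           simR_live k' t0. split; [|split; [eapply SC_InT; eauto|eapply SC_OutT; eapply nfo_SC; eauto]].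
           pose proof (nfo_complies C En) as C2. eapply comp_succ; [exact C2|].
           eapply Sys_Sync; [apply St_InT|apply St_OutT|].
           eapply pair_sync; [exact C2|apply ustep_InT|apply ustep_OutT|discriminate|discriminate|apply no_check_InT].
        -- eapply comp_succ; [exact CX|]. simpl. eapply Sys_Sync; [apply St_InT|exact Hx2|simpl; auto].
      * inversion Hx1; subst. destruct a2; simpl in Hm; try contradiction.
        exists (brOutT (build k') s r1). split.
        -- unfold brOutT. destruct (nfo s) as [t0|] eqn:En; [destruct t0|]; try (left; reflexivity).
           simR_live k' t0. split; [|split; [eapply SC_OutT; eauto|eapply SC_InT; eapply nfo_SC; eauto]].
           pose proof (nfo_complies C En) as C2. eapply comp_succ; [exact C2|].
           eapply Sys_Sync; [apply St_OutT|apply St_InT|].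
           eapply pair_sync; [exact C2|apply ustep_OutT|apply ustep_InT|discriminate|discriminate|apply no_check_OutT].
        -- eapply comp_succ; [exact CX|]. simpl. eapply Sys_Sync; [apply St_OutT|exact Hx2|simpl; auto].
      * inversion Hx1; subst. destruct a2; simpl in Hm; try contradiction.
        inversion Hx2; subst.
        simpl in CX. unfold brOutS in CX. destruct (nfo s) as [t0|] eqn:En; [destruct t0|].
        all: try (destruct (classic (B c t)) as [Hb|Hb];
          [exists r1; split; [left; reflexivity|eapply comp_succ; [exact CX|eapply Sys_Sync; [apply St_OutS|apply St_InS|exact Hb]]]
          |exfalso; apply (@no_check_OutS c r1); apply (comp_stuck CX);
           eapply ustep_stuck; [apply ustep_OutS|apply ustep_InS|discriminate|discriminate|exact Hb]]).
        destruct (classic (B t0_1 t)) as [Hb|Hb].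
        -- exists (build k' r1 t0_2). split.
           ++ simR_live k' t0_2.
              pose proof (nfo_complies C En) as C2.
              split; [|split; [eapply SC_OutS2; eauto|eapply SC_InS2; eapply nfo_SC; eauto]].
              eapply comp_succ; [exact C2|]. eapply Sys_Sync; [apply St_OutS|apply St_InS|].
              eapply pair_sync; [exact C2|apply ustep_OutS|apply ustep_InS|discriminate|discriminate|apply no_check_OutS].
           ++ eapply comp_succ; [exact CX|]. eapply Sys_Sync; [apply St_OutS|apply St_InS|exact Hb].
        -- exfalso. eapply no_check_OutS. apply (comp_stuck CX).
           eapply ustep_stuck; [apply ustep_OutS|apply ustep_InS|discriminate|discriminate|exact Hb].
      * inversion Hx1; subst. destruct a2; simpl in Hm; try contradiction.
        inversion Hx2; subst.
        simpl in CX. unfold brInS in CX. destruct (nfo s) as [t0|] eqn:En; [destruct t0|].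
        all: try (destruct (classic (B t c)) as [Hb|Hb];
          [exists r1; split; [left; reflexivity|eapply comp_succ; [exact CX|eapply Sys_Sync; [apply St_InS|apply St_OutS|exact Hb]]]
          |exfalso; apply (@no_check_InS c r1); apply (comp_stuck CX);
           eapply ustep_stuck; [apply ustep_InS|apply ustep_OutS|discriminate|discriminate|exact Hb]]).
        destruct (classic (B t t0_1)) as [Hb|Hb].
        -- exists (build k' r1 t0_2). split.
           ++ simR_live k' t0_2.
              pose proof (nfo_complies C En) as C2.
              split; [|split; [eapply SC_InS2; eauto|eapply SC_OutS2; eapply nfo_SC; eauto]].
              eapply comp_succ; [exact C2|]. eapply Sys_Sync; [apply St_InS|apply St_OutS|].
              eapply pair_sync; [exact C2|apply ustep_InS|apply ustep_OutS|discriminate|discriminate|apply no_check_InS].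
           ++ eapply comp_succ; [exact CX|]. eapply Sys_Sync; [apply St_InS|apply St_OutS|exact Hb].
        -- exfalso. eapply no_check_InS. apply (comp_stuck CX).
           eapply ustep_stuck; [apply ustep_InS|apply ustep_OutS|discriminate|discriminate|exact Hb].
      *
        inversion Hx1; subst. destruct a2; simpl in Hm; try contradiction. subst.
        inversion Hx2; subst.
        exists (brExt (build k') s (l0, r1)). split.
        -- unfold brExt. destruct (nfo s) as [t0|] eqn:En; [destruct t0|]; try (left; reflexivity).
           simpl. destruct (lookup l0 l) as [y|] eqn:El; [|left; reflexivity].
           pose proof (lookup_some _ _ El) as Hy.
           simR_live k' y.
           split; [|split; [eapply SC_Ext_in; eauto|eapply SC_Int_in; [eapply nfo_SC; eauto|eauto]]].
           assert (C2 : complies leb B' (Ext bs) (Int [(l0, y)])) by (eapply comp_int_single; [eapply nfo_complies; eauto | exact Hy]).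
           eapply comp_succ; [exact C2|]. eapply Sys_Sync; [apply St_Ext; eauto|apply St_OutL|simpl; reflexivity].
        -- eapply comp_succ; [exact CX|]. simpl. eapply Sys_Sync; [apply St_Ext|apply St_OutL|simpl; reflexivity].
           apply in_map_iff. exists (l0, r1); split; [reflexivity|auto].
      *
        inversion Hx1; subst; [|nomatch]. destruct a2; simpl in Hm; try contradiction. subst.
        inversion Hx2; subst.
        exists (brInt (build k') s (l0, r1)). split.
        -- unfold brInt. destruct (nfo s) as [t0|] eqn:En; [destruct t0|]; try (left; reflexivity).
           simpl. destruct (lookup l0 l) as [y|] eqn:El; [|left; reflexivity].
           pose proof (lookup_some _ _ El) as Hy.
           simR_live k' y.
           split; [|split; [eapply SC_Int_in; [eauto|left; reflexivity]|eapply SC_Ext_in; [eapply nfo_SC; eauto|eauto]]].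
           pose proof (nfo_complies C En) as C2.
           eapply comp_succ; [exact C2|]. eapply Sys_Sync; [apply St_OutL|apply St_Ext; eauto|simpl; reflexivity].
        -- eapply comp_succ; [exact CX|]. simpl. eapply Sys_Sync; [apply St_OutL|apply St_Ext; eauto|simpl; reflexivity].
      * inversion Hx1; subst; nomatch.
      * exfalso; eapply SC_notVar; eauto.
Qed.

Lemma Sim n (r s2 : term) : BadRun B' n r s2 -> forall X, SimR X r n -> complies leb B X s2 -> False.
Proof.
  induction 1 as [a b Hst Hnc | n a b a' b' Hs Hb IH]; intros X HS CX.
  - destruct HS as [E | [k [s [E [Hk [C [Sr Ss]]]]]]].
    + subst. apply Hnc. apply (comp_stuck CX). intros a' b' H. apply (Hst a' b'). apply sys_mono; auto.
    + subst. assert (NoB : forall a' b', ~ sys_tau leb B (build k a s) b a' b').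
      { intros a' b' H. destruct (move_transfer Hk C Sr Ss H) as [r' [s'' H']]. eapply Hst; eauto. }
      destruct (comp_stuck CX NoB) as [Ck Cb].
      destruct (@build_check k a s Hk Sr Ck) as [E|[x [bb E]]]; subst.
      * apply Hnc. split; auto. eexists; constructor.
      * eapply Hst. apply Sys_L. apply St_Mu.
  - destruct (sim_step HS CX Hs) as [X1 [HS1 C1]]. eapply IH; eauto.
Qed.

Lemma mono_main (s1 s2 : term) : subcontract leb B s1 s2 -> subcontract leb B' s1 s2.
Proof.
  intros [S1 [S2 H12]]. split; [auto|split; [auto|]].
  intros r Sr Cr. apply NNPP; intro Nc. destruct (bad_exists Nc) as [n Hb].
  assert (SX : SC (build (S n) r s1)) by (apply SC_build; auto).
  assert (CX1 : complies leb B (build (S n) r s1) s1) by (apply LemA; auto).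
  pose proof (H12 _ SX CX1) as CX2.
  apply (Sim Hb (X := build (S n) r s1)); auto.
  right. exists (S n), s1. split; [reflexivity|]. split; [lia|]. auto.
Qed.
End Main.
End Proof.

Theorem mainTheorem10 (BT L : Type) (leb : BT -> BT -> Prop)
  (leb_refl : forall t, leb t t)
  (leb_trans : forall t1 t2 t3, leb t1 t2 -> leb t2 t3 -> leb t1 t3) :
  (forall B : term BT L -> term BT L -> Prop,
      preorder_SC B -> preorder_SC (subcontract leb B)) /\
  (forall B B' : term BT L -> term BT L -> Prop,
      preorder_SC B -> preorder_SC B' ->
      (forall s1 s2, B s1 s2 -> B' s1 s2) ->
      forall s1 s2, subcontract leb B s1 s2 -> subcontract leb B' s1 s2).
Proof.
  split.
  - intros B HB. split; [|split].
    + intros s1 s2 [S1 [S2 _]]; auto.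
    + intros s Hs; split; [auto|split; auto].
    + intros s1 s2 s3 [S1 [S2 H12]] [_ [S3 H23]]; split; [auto|split; auto].
  - intros B B' [_ [HBr _]] [_ [_ HB't]] Hsub s1 s2 H.
    eapply mono_main; eauto.
Qed.
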